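(* Let $f$ be analytic on $\mathbb{D}$ with $0<\operatorname{Diam} f(\mathbb{D})<\infty$. Then for all $z,w\in\mathbb{D}$, \[ \frac{|f(z)-f(w)|}{\operatorname{Diam} f(\mathbb{D})}\le \frac{|z-w|}{|1-\bar w z|+\sqrt{(1-|z|^2)(1-|w|^2)}}. \]
   Context: $\mathbb{D}$ is the open unit disk; $\operatorname{Diam}E=\sup_{z,w\in E}|z-w|$. *)

(* Defs.v *)
From Stdlib Require Import Reals.
From Coquelicot Require Import Coquelicot.
Open Scope R_scope.

Definition unit_disk (z : C) : Prop := Cmod z < 1.

Definition analytic_on_disk (f : C -> C) : Prop :=
  forall z : C, unit_disk z -> @ex_derive C_AbsRing C_NormedModule f z.

Definition diam_image_disk (f : C -> C) : Rbar :=
  Lub_Rbar (fun r : R => exists z w : C,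
    unit_disk z /\ unit_disk w /\ r = Cmod (f z - f w)%C).

(* Main.v *)
Require Import Defs.
From Stdlib Require Import Reals.
From Coquelicot Require Import Coquelicot.
From Stdlib Require Import Lra ZArith FunctionalExtensionality Classical.
Open Scope R_scope.

Lemma C_R_norm (z : C) : norm (K:=R_AbsRing) (V:=C_R_NormedModule) z = Cmod z.
Proof.
  unfold norm; simpl. unfold prod_norm, Cmod; simpl. unfold norm; simpl.
  unfold abs; simpl. f_equal. rewrite !Rmult_1_r, <- !Rabs_mult, !Rabs_right; try reflexivity; nra.
Qed.

Lemma C_R_scal (r : R) (z : C) : scal (V:=C_R_NormedModule) r z = (RtoC r * z)%C.
Proof.
  destruct z as [a b]. unfold scal; simpl. unfold prod_scal; simpl.
  unfold scal; simpl. unfold mult; simpl. apply injective_projections; simpl; ring.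
Qed.

Lemma Cmod_le_abs (z : C) : Cmod z <= Rabs (fst z) + Rabs (snd z).
Proof.
  destruct z as [a b]. unfold Cmod; simpl.
  apply Rsqr_incr_0_var. 2: pose proof (Rabs_pos a); pose proof (Rabs_pos b); lra.
  rewrite Rsqr_sqrt by nra. unfold Rsqr.
  assert (a*a = Rabs a * Rabs a) by (rewrite <- Rabs_mult; rewrite Rabs_right; nra).
  assert (b*b = Rabs b * Rabs b) by (rewrite <- Rabs_mult; rewrite Rabs_right; nra).
  pose proof (Rabs_pos a); pose proof (Rabs_pos b). nra.
Qed.

Lemma locC_abs_prod (z : C) (P : C -> Prop) :
  locally (T:=AbsRing_UniformSpace C_AbsRing) z P -> locally (T:=C_UniformSpace) z P.
Proof.
  intros [eps H]. assert (he : 0 < eps / 2) by (destruct eps; simpl; lra).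
  exists (mkposreal _ he). intros y [H1 H2]. apply H.
  change (Cmod (y - z)%C < eps).
  change (Rabs (fst y - fst z) < eps / 2) in H1.
  change (Rabs (snd y - snd z) < eps / 2) in H2.
  eapply Rle_lt_trans. apply Cmod_le_abs. destruct y, z; simpl in *. unfold Rminus in *. lra.
Qed.

Lemma locC_prod_abs (z : C) (P : C -> Prop) :
  locally (T:=C_UniformSpace) z P -> locally (T:=AbsRing_UniformSpace C_AbsRing) z P.
Proof.
  intros [eps H]. exists eps. intros y Hy. apply H.
  change (Cmod (y - z)%C < eps) in Hy.
  pose proof (Rmax_Cmod (y - z)%C) as Hm.
  pose proof (Rmax_l (Rabs (fst (y - z)%C)) (Rabs (snd (y - z)%C))).
  pose proof (Rmax_r (Rabs (fst (y - z)%C)) (Rabs (snd (y - z)%C))).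
  destruct y, z; simpl in *. unfold Rminus in *. split; [change (Rabs (r + - r1) < eps) | change (Rabs (r0 + - r2) < eps)]; lra.
Qed.

Lemma filterdiff_C_R (P : C -> C) (z l : C) :
  is_derive (K:=C_AbsRing) (V:=C_NormedModule) P z l ->
  filterdiff (K:=R_AbsRing) (U:=C_R_NormedModule) (V:=C_R_NormedModule) P
     (locally z) (fun h => (l * h)%C).
Proof.
  intros [_ H]. split.
  - split.
    + intros x y. change (@eq C (l * (x + y))%C (l * x + l * y)%C). ring.
    + intros k x. rewrite !C_R_scal. change (@eq C (l * (k * x))%C (k * (l * x))%C). ring.
    + exists (Cmod l + 1). split. pose proof (Cmod_ge_0 l); lra.
      intros x. rewrite !C_R_norm. change (Cmod (l * x)%C <= (Cmod l + 1) * Cmod x).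
      rewrite Cmod_mult. pose proof (Cmod_ge_0 x). nra.
  - intros x Hx.
    assert (Hxz : x = z).
    { symmetry. apply (is_filter_lim_locally_unique (K:=R_AbsRing) (V:=C_R_NormedModule)). exact Hx. }
    subst x.
    assert (Hx' : is_filter_lim (locally (T:=AbsRing_UniformSpace C_AbsRing) z) z) by (intros Q HQ; exact HQ).
    specialize (H z Hx'). intros eps. specialize (H eps).
    apply locC_abs_prod. 
    eapply filter_imp; [| exact H]. intros y Hy.
    rewrite !C_R_norm. change (Cmod (P y - P z - (y - z) * l) <= eps * Cmod (y - z)) in Hy.
    change (Cmod (P y - P z - l * (y - z)) <= eps * Cmod (y - z)).
    replace (l * (y - z))%C with ((y - z) * l)%C by ring. exact Hy.
Qed.

Lemma is_derive_compRC (P : C -> C) (g : R -> C) (t : R) (l v : C) :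
  is_derive (K:=C_AbsRing) (V:=C_NormedModule) P (g t) l ->
  is_derive (K:=R_AbsRing) (V:=C_R_NormedModule) g t v ->
  is_derive (K:=R_AbsRing) (V:=C_R_NormedModule) (fun s => P (g s)) t (l * v)%C.
Proof.
  intros HP Hg.
  pose proof (filterdiff_comp' (K:=R_AbsRing) (U:=R_NormedModule) (V:=C_R_NormedModule) (W:=C_R_NormedModule) g P t _ _ Hg (filterdiff_C_R P (g t) l HP)) as H.
  unfold is_derive. eapply filterdiff_ext_lin. exact H.
  intros y. simpl. rewrite !C_R_scal. change (@eq C (l * (y * v))%C (y * (l * v))%C). ring.
Qed.

Lemma derive_abs_C (f : C -> C) (z l : C) : is_derive (K:=C_AbsRing) (V:=AbsRing_NormedModule C_AbsRing) f z l -> is_derive (K:=C_AbsRing) (V:=C_NormedModule) f z l.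
Proof.
  intros [[H1 H2 H3] Hd]. split. split.
  - exact H1.
  - exact H2.
  - exact H3.
  - exact Hd.
Qed.

Lemma derive_C_abs (f : C -> C) (z l : C) : is_derive (K:=C_AbsRing) (V:=C_NormedModule) f z l -> is_derive (K:=C_AbsRing) (V:=AbsRing_NormedModule C_AbsRing) f z l.
Proof.
  intros [[H1 H2 H3] Hd]. split. split.
  - exact H1.
  - exact H2.
  - exact H3.
  - exact Hd.
Qed.

Lemma deriv_quad (a b z : C) : is_derive (K:=C_AbsRing) (V:=C_NormedModule) (fun w => a * w + b * (w * w))%C z (a + b * (2 * z))%C.
Proof.
  apply derive_abs_C.
  assert (Hid := is_derive_id (K:=C_AbsRing) z).
  assert (H1 := is_derive_mult (K:=C_AbsRing) (fun w => a) (fun w => w) z zero one (is_derive_const (K:=C_AbsRing) (V:=AbsRing_NormedModule C_AbsRing) a z) Hid Cmult_comm).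
  assert (H2 := is_derive_mult (K:=C_AbsRing) (fun w => w) (fun w => w) z one one Hid Hid Cmult_comm).
  assert (H3 := is_derive_mult (K:=C_AbsRing) (fun w => b) (fun w => w * w)%C z zero _ (is_derive_const (K:=C_AbsRing) (V:=AbsRing_NormedModule C_AbsRing) b z) H2 Cmult_comm).
  assert (H4 := is_derive_plus (K:=C_AbsRing) (V:=AbsRing_NormedModule C_AbsRing) _ _ z _ _ H1 H3).
  simpl in H4. unfold plus, mult, zero, one in H4; simpl in H4.
  replace (a + b * (2 * z))%C with (Cplus (Cplus (Cmult 0 z) (Cmult a 1)) (Cplus (Cmult 0 (z * z)) (Cmult b (Cplus (Cmult 1 z) (Cmult z 1)))))%C by ring.
  exact H4.
Qed.

Lemma cont_abs_of_C {T : UniformSpace} (f : T -> C) (x : T) :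
  continuous (U:=C_UniformSpace) f x -> continuous (U:=AbsRing_UniformSpace C_AbsRing) f x.
Proof. intros H P HP. apply H. apply locC_abs_prod. exact HP. Qed.

Lemma cont_C_of_abs {T : UniformSpace} (f : T -> C) (x : T) :
  continuous (U:=AbsRing_UniformSpace C_AbsRing) f x -> continuous (U:=C_UniformSpace) f x.
Proof. intros H P HP. apply H. apply locC_prod_abs. exact HP. Qed.

Lemma cont_dom_abs_C {W : UniformSpace} (f : C -> W) (x : C) :
  continuous (T:=AbsRing_UniformSpace C_AbsRing) f x -> continuous (T:=C_UniformSpace) f x.
Proof. intros H P HP. apply locC_abs_prod. apply H. exact HP. Qed.

Lemma ex_derive_contC (K : C -> C) (z : C) :
  ex_derive (K:=C_AbsRing) (V:=C_NormedModule) K z ->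
  continuous (T:=C_UniformSpace) (U:=C_UniformSpace) K z.
Proof.
  intros H. apply cont_dom_abs_C. apply (ex_derive_continuous (K:=C_AbsRing) (V:=C_NormedModule)). exact H.
Qed.

Lemma contC_mult {T : UniformSpace} (f g : T -> C) (x : T) :
  continuous (U:=C_UniformSpace) f x -> continuous (U:=C_UniformSpace) g x ->
  continuous (U:=C_UniformSpace) (fun y => (f y * g y)%C) x.
Proof.
  intros Hf Hg. apply cont_C_of_abs.
  apply (continuous_mult (K:=C_AbsRing) f g); apply cont_abs_of_C; assumption.
Qed.

Lemma contC_plus {T : UniformSpace} (f g : T -> C) (x : T) :
  continuous (U:=C_UniformSpace) f x -> continuous (U:=C_UniformSpace) g x ->
  continuous (U:=C_UniformSpace) (fun y => (f y + g y)%C) x.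
Proof.
  intros Hf Hg. apply (continuous_plus (K:=C_AbsRing) (V:=C_NormedModule) f g); assumption.
Qed.

Lemma contC_minus {T : UniformSpace} (f g : T -> C) (x : T) :
  continuous (U:=C_UniformSpace) f x -> continuous (U:=C_UniformSpace) g x ->
  continuous (U:=C_UniformSpace) (fun y => (f y - g y)%C) x.
Proof.
  intros Hf Hg. apply (continuous_minus (K:=C_AbsRing) (V:=C_NormedModule) f g); assumption.
Qed.

Lemma contC_const {T : UniformSpace} (c : C) (x : T) :
  continuous (U:=C_UniformSpace) (fun _ => c) x.
Proof. apply continuous_const. Qed.

Lemma contRC_pair (f g : R -> R) (t : R) :
  continuous f t -> continuous g t ->
  continuous (T:=R_UniformSpace) (U:=C_UniformSpace) (fun s => (f s, g s) : C) t.
Proof.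
  intros Hf Hg P [eps HP].
  assert (H1 := Hf (ball (f t) eps) (locally_ball _ _)).
  assert (H2 := Hg (ball (g t) eps) (locally_ball _ _)).
  unfold filtermap in H1, H2. simpl in H1, H2.
  unfold filtermap. generalize (filter_and _ _ H1 H2). apply filter_imp. intros s [a b]. apply HP. split; assumption.
Qed.

Definition e (t : R) : C := (cos t, sin t).

Lemma cont_e (t : R) : continuous (T:=R_UniformSpace) (U:=C_UniformSpace) e t.
Proof. apply contRC_pair; [apply continuous_cos | apply continuous_sin]. Qed.

Lemma contRC_RtoC (f : R -> R) (t : R) : continuous f t ->
  continuous (T:=R_UniformSpace) (U:=C_UniformSpace) (fun s => RtoC (f s)) t.
Proof. intros H. apply contRC_pair. exact H. apply continuous_const. Qed.

Lemma Cmod_e (t : R) : Cmod (e t) = 1.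
Proof.
  unfold Cmod, e; simpl. rewrite Rmult_1_r, Rmult_1_r.
  replace (cos t * cos t + sin t * sin t) with 1. apply sqrt_1.
  rewrite <- (sin2_cos2 t). unfold Rsqr. ring.
Qed.

Lemma prod_norm_le (z : C) : norm (K:=R_AbsRing) (V:=C_R_NormedModule) z <= Rabs (fst z) + Rabs (snd z).
Proof. rewrite C_R_norm. apply Cmod_le_abs. Qed.

Lemma is_derive_RC_pair (g : R -> C) (t a b : R) :
  is_derive (fun s => fst (g s)) t a -> is_derive (fun s => snd (g s)) t b ->
  is_derive (K:=R_AbsRing) (V:=C_R_NormedModule) g t (a, b).
Proof.
  intros [_ Ha] [_ Hb]. split.
  - apply is_linear_scal_l.
  - intros x Hx. assert (Hxt : x = t).
    { symmetry. apply (is_filter_lim_locally_unique (K:=R_AbsRing) (V:=R_NormedModule)). exact Hx. }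
    subst x.
    specialize (Ha t Hx). specialize (Hb t Hx). intros eps.
    assert (he : 0 < eps / 2) by (destruct eps; simpl; lra).
    specialize (Ha (mkposreal _ he)). specialize (Hb (mkposreal _ he)).
    generalize (filter_and _ _ Ha Hb). apply filter_imp. intros y [H1 H2].
    eapply Rle_trans. apply prod_norm_le. simpl in H1, H2 |- *.
    unfold norm in H1, H2 |- *; simpl in H1, H2 |- *.
    unfold minus, plus, opp, scal in H1, H2 |- *; simpl in H1, H2 |- *.
    unfold prod_plus, prod_opp, prod_scal in *; simpl in *.
    unfold plus, opp, scal, mult, abs in *; simpl in *. lra.
Qed.

Lemma is_derive_RC_ext (g h : R -> C) (t : R) (l : C) :
  (forall s, g s = h s) -> is_derive (K:=R_AbsRing) (V:=C_R_NormedModule) g t l ->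
  is_derive (K:=R_AbsRing) (V:=C_R_NormedModule) h t l.
Proof. intros E H. eapply is_derive_ext; [exact E | exact H]. Qed.

Lemma is_derive_rad (t r : R) :
  is_derive (K:=R_AbsRing) (V:=C_R_NormedModule) (fun s => (RtoC s * e t)%C) r (e t).
Proof.
  eapply is_derive_RC_ext with (g := fun s => (s * cos t, s * sin t)).
  - intros s. unfold e. apply injective_projections; simpl; ring.
  - unfold e. apply is_derive_RC_pair; simpl.
    + auto_derive; auto; ring.
    + auto_derive; auto; ring.
Qed.

Lemma is_derive_arc (r t : R) :
  is_derive (K:=R_AbsRing) (V:=C_R_NormedModule) (fun s => (RtoC r * e s)%C) t (Ci * RtoC r * e t)%C.
Proof.
  eapply is_derive_RC_ext with (g := fun s => (r * cos s, r * sin s)).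
  - intros s. unfold e. apply injective_projections; simpl; ring.
  - replace (Ci * RtoC r * e t)%C with ((- (r * sin t)), r * cos t).
    2: { unfold e, Ci. apply injective_projections; simpl; ring. }
    apply is_derive_RC_pair; simpl.
    + auto_derive; auto; ring.
    + auto_derive; auto; ring.
Qed.

Lemma ex_derive_R_cont (g : R -> C) (t : R) (l : C) :
  is_derive (K:=R_AbsRing) (V:=C_R_NormedModule) g t l ->
  continuous (T:=R_UniformSpace) (U:=C_UniformSpace) g t.
Proof.
  intros H. apply (ex_derive_continuous (K:=R_AbsRing) (V:=C_R_NormedModule)). exists l. exact H.
Qed.

Lemma path_FTC (P K : C -> C) (g dg : R -> C) (a b : R) :
  a <= b ->
  (forall t, a <= t <= b -> is_derive (K:=R_AbsRing) (V:=C_R_NormedModule) g t (dg t)) ->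
  (forall t, a <= t <= b -> continuous (T:=R_UniformSpace) (U:=C_UniformSpace) dg t) ->
  (forall t, a <= t <= b -> is_derive (K:=C_AbsRing) (V:=C_NormedModule) P (g t) (K (g t))) ->
  (forall t, a <= t <= b -> continuous (T:=C_UniformSpace) (U:=C_UniformSpace) K (g t)) ->
  is_RInt (V:=C_R_CompleteNormedModule) (fun t => (K (g t) * dg t)%C) a b (P (g b) - P (g a))%C.
Proof.
  intros Hab Hg Hdg HP HK.

  apply (is_RInt_derive (V:=C_R_CompleteNormedModule) (fun t => P (g t))).
  - intros t Ht. rewrite Rmin_left, Rmax_right in Ht by lra.
    apply is_derive_compRC. apply HP; lra. apply Hg; lra.
  - intros t Ht. rewrite Rmin_left, Rmax_right in Ht by lra.
    apply contC_mult.
    + apply (continuous_comp g K). eapply ex_derive_R_cont. apply Hg; lra. apply HK; lra.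
    + apply Hdg; lra.
Qed.

Lemma is_RInt_Cmul (f : R -> C) (a b : R) (l c : C) :
  is_RInt (V:=C_R_NormedModule) f a b l ->
  is_RInt (V:=C_R_NormedModule) (fun t => (c * f t)%C) a b (c * l)%C.
Proof.
  intros H.
  assert (H1 := is_RInt_fct_extend_fst (U:=R_NormedModule) (V:=R_NormedModule) f a b l H).
  assert (H2 := is_RInt_fct_extend_snd (U:=R_NormedModule) (V:=R_NormedModule) f a b l H).
  apply (is_RInt_fct_extend_pair (U:=R_NormedModule) (V:=R_NormedModule)); simpl.
  - eapply is_RInt_ext. 2: apply (is_RInt_minus (V:=R_NormedModule)); apply (is_RInt_scal (V:=R_NormedModule)); [exact H1 | exact H2].
    intros x _. simpl. unfold minus, plus, opp, scal, mult; simpl. unfold mult; simpl. ring.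
  - eapply is_RInt_ext. 2: apply (is_RInt_plus (V:=R_NormedModule)); apply (is_RInt_scal (V:=R_NormedModule)); [exact H2 | exact H1].
    intros x _. simpl. unfold minus, plus, opp, scal, mult; simpl. unfold mult; simpl. ring.
Qed.

Lemma ex_RInt_C (f : R -> C) (a b : R) :
  a <= b -> (forall t, a <= t <= b -> continuous (T:=R_UniformSpace) (U:=C_UniformSpace) f t) ->
  ex_RInt (V:=C_R_CompleteNormedModule) f a b.
Proof.
  intros Hab H. apply ex_RInt_continuous. intros z Hz.
  rewrite Rmin_left, Rmax_right in Hz by lra. apply H; lra.
Qed.

Lemma is_RInt_bound (f : R -> C) (a b B : R) (l : C) :
  a <= b -> (forall t, a <= t <= b -> Cmod (f t) <= B) ->
  is_RInt (V:=C_R_NormedModule) f a b l -> Cmod l <= (b - a) * B.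
Proof.
  intros Hab HB H. rewrite <- C_R_norm.
  apply (norm_RInt_le_const (V:=C_R_NormedModule) f); auto.
  intros x Hx. rewrite C_R_norm. auto.
Qed.

Lemma RInt_ChaslesC (f : R -> C) (a b c : R) :
  ex_RInt (V:=C_R_CompleteNormedModule) f a b -> ex_RInt (V:=C_R_CompleteNormedModule) f b c ->
  RInt (V:=C_R_CompleteNormedModule) f a c = (RInt (V:=C_R_CompleteNormedModule) f a b + RInt (V:=C_R_CompleteNormedModule) f b c)%C.
Proof. intros H1 H2. rewrite <- (RInt_Chasles (V:=C_R_CompleteNormedModule) f a b c H1 H2). reflexivity. Qed.

Lemma RInt_minusC (f g : R -> C) (a b : R) :
  ex_RInt (V:=C_R_CompleteNormedModule) f a b -> ex_RInt (V:=C_R_CompleteNormedModule) g a b ->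
  RInt (V:=C_R_CompleteNormedModule) (fun t => f t - g t)%C a b = (RInt (V:=C_R_CompleteNormedModule) f a b - RInt (V:=C_R_CompleteNormedModule) g a b)%C.
Proof. intros H1 H2. exact (RInt_minus (V:=C_R_CompleteNormedModule) f g a b H1 H2). Qed.

Lemma diff_bound (g dg : R -> C) (s t B : R) :
  s <= t ->
  (forall u, s <= u <= t -> is_derive (K:=R_AbsRing) (V:=C_R_NormedModule) g u (dg u)) ->
  (forall u, s <= u <= t -> continuous (T:=R_UniformSpace) (U:=C_UniformSpace) dg u) ->
  (forall u, s <= u <= t -> Cmod (dg u) <= B) ->
  Cmod (g t - g s)%C <= (t - s) * B.
Proof.
  intros Hst Hg Hdg HB.
  assert (H : is_RInt (V:=C_R_CompleteNormedModule) dg s t (minus (g t) (g s))).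
  { apply (is_RInt_derive (V:=C_R_CompleteNormedModule)).
    - intros x Hx. rewrite Rmin_left, Rmax_right in Hx by lra. apply Hg; lra.
    - intros x Hx. rewrite Rmin_left, Rmax_right in Hx by lra. apply Hdg; lra. }
  exact (is_RInt_bound dg s t B _ Hst HB H).
Qed.

Lemma cont_arcder (r : R) (t : R) :
  continuous (T:=R_UniformSpace) (U:=C_UniformSpace) (fun s => (Ci * RtoC r * e s)%C) t.
Proof. apply contC_mult. apply contC_const. apply cont_e. Qed.

Lemma e_lip (t s : R) : Cmod (e t - e s)%C <= Rabs (t - s).
Proof.
  assert (Hg : forall u, is_derive (K:=R_AbsRing) (V:=C_R_NormedModule) e u (Ci * RtoC 1 * e u)%C).
  { intros u. eapply is_derive_RC_ext. 2: apply (is_derive_arc 1 u).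
    intros x; simpl. unfold e. apply injective_projections; simpl; ring. }
  assert (HB : forall u, Cmod (Ci * RtoC 1 * e u)%C <= 1).
  { intros u. rewrite !Cmod_mult, Cmod_Ci, Cmod_R, Cmod_e, Rabs_R1. lra. }
  destruct (Rle_dec s t) as [H|H].
  - rewrite Rabs_right by lra. replace (t - s) with ((t - s) * 1) by ring.
    apply (diff_bound e (fun u => Ci * RtoC 1 * e u)%C s t 1 H); auto.
    intros; apply cont_arcder.
  - rewrite Rabs_left by lra. replace (- (t - s)) with ((s - t) * 1) by ring.
    replace (e t - e s)%C with (- (e s - e t))%C by ring. rewrite Cmod_opp.
    apply (diff_bound e (fun u => Ci * RtoC 1 * e u)%C t s 1); auto. lra.
    intros; apply cont_arcder.
Qed.

Lemma polar_lip (r t r0 t0 : R) : 0 <= r0 ->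
  Cmod (RtoC r * e t - RtoC r0 * e t0)%C <= Rabs (r - r0) + r0 * Rabs (t - t0).
Proof.
  intros H0.
  replace (RtoC r * e t - RtoC r0 * e t0)%C with (RtoC (r - r0) * e t + RtoC r0 * (e t - e t0))%C.
  2: { apply injective_projections; simpl; ring. }
  eapply Rle_trans. apply Cmod_triangle. rewrite !Cmod_mult, !Cmod_R, Cmod_e.
  rewrite (Rabs_right r0) by lra. pose proof (e_lip t t0). nra.
Qed.

Definition radF (K : C -> C) (t r : R) : C := (K (RtoC r * e t) * e t)%C.
Definition arcF (K : C -> C) (r t : R) : C := (K (RtoC r * e t) * (Ci * RtoC r * e t))%C.
Definition RadI (K : C -> C) (r1 r2 t : R) : C := RInt (V:=C_R_CompleteNormedModule) (radF K t) r1 r2.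
Definition ArcI (K : C -> C) (r t1 t2 : R) : C := RInt (V:=C_R_CompleteNormedModule) (arcF K r) t1 t2.
Definition Jp (K : C -> C) (a1 a2 b1 b2 : R) : C :=
  (RadI K a1 a2 b1 + ArcI K a2 b1 b2 - RadI K a1 a2 b2 - ArcI K a1 b1 b2)%C.

Definition ContR (K : C -> C) (a1 a2 b1 b2 : R) : Prop :=
  forall r t, a1 <= r <= a2 -> b1 <= t <= b2 -> continuous (T:=C_UniformSpace) (U:=C_UniformSpace) K (RtoC r * e t)%C.

Lemma cont_radpath (t r : R) : continuous (T:=R_UniformSpace) (U:=C_UniformSpace) (fun s => (RtoC s * e t)%C) r.
Proof. eapply ex_derive_R_cont. apply is_derive_rad. Qed.

Lemma cont_arcpath (r t : R) : continuous (T:=R_UniformSpace) (U:=C_UniformSpace) (fun s => (RtoC r * e s)%C) t.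
Proof. eapply ex_derive_R_cont. apply is_derive_arc. Qed.

Lemma ex_rad K a1 a2 b1 b2 t x y : ContR K a1 a2 b1 b2 -> b1 <= t <= b2 -> a1 <= x -> x <= y -> y <= a2 ->
  ex_RInt (V:=C_R_CompleteNormedModule) (radF K t) x y.
Proof.
  intros HK Ht Hx Hxy Hy. apply ex_RInt_C; auto. intros u Hu. unfold radF.
  apply contC_mult. apply (continuous_comp (fun s => (RtoC s * e t)%C) K). apply cont_radpath.
  apply HK; lra. apply contC_const.
Qed.

Lemma ex_arc K a1 a2 b1 b2 r x y : ContR K a1 a2 b1 b2 -> a1 <= r <= a2 -> b1 <= x -> x <= y -> y <= b2 ->
  ex_RInt (V:=C_R_CompleteNormedModule) (arcF K r) x y.
Proof.
  intros HK Hr Hx Hxy Hy. apply ex_RInt_C; auto. intros u Hu. unfold arcF.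
  apply contC_mult. apply (continuous_comp (fun s => (RtoC r * e s)%C) K). apply cont_arcpath.
  apply HK; lra. apply cont_arcder.
Qed.

Lemma Jp_split K a1 a2 b1 b2 : ContR K a1 a2 b1 b2 -> a1 <= a2 -> b1 <= b2 ->
  let ma := (a1 + a2) / 2 in let mb := (b1 + b2) / 2 in
  Jp K a1 a2 b1 b2 = (Jp K a1 ma b1 mb + Jp K ma a2 b1 mb + Jp K a1 ma mb b2 + Jp K ma a2 mb b2)%C.
Proof.
  intros HK Ha Hb ma mb. unfold Jp, RadI, ArcI.
  assert (Ha1 : a1 <= ma) by (unfold ma; lra). assert (Ha2 : ma <= a2) by (unfold ma; lra).
  assert (Hb1 : b1 <= mb) by (unfold mb; lra). assert (Hb2 : mb <= b2) by (unfold mb; lra).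
  rewrite (RInt_ChaslesC (radF K b1) a1 ma a2) by (eapply ex_rad; eauto; lra).
  rewrite (RInt_ChaslesC (radF K b2) a1 ma a2) by (eapply ex_rad; eauto; lra).
  rewrite (RInt_ChaslesC (arcF K a2) b1 mb b2) by (eapply ex_arc; eauto; lra).
  rewrite (RInt_ChaslesC (arcF K a1) b1 mb b2) by (eapply ex_arc; eauto; lra).
  ring.
Qed.

Lemma rad_prim (P K : C -> C) (t x y : R) : x <= y ->
  (forall r, x <= r <= y -> is_derive (K:=C_AbsRing) (V:=C_NormedModule) P (RtoC r * e t)%C (K (RtoC r * e t)%C)) ->
  (forall r, x <= r <= y -> continuous (T:=C_UniformSpace) (U:=C_UniformSpace) K (RtoC r * e t)%C) ->
  RInt (V:=C_R_CompleteNormedModule) (radF K t) x y = (P (RtoC y * e t) - P (RtoC x * e t))%C.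
Proof.
  intros Hxy HP HK. apply is_RInt_unique. unfold radF.
  apply (path_FTC P K (fun r => RtoC r * e t)%C (fun _ => e t)); auto.
  intros; apply is_derive_rad. intros; apply contC_const.
Qed.

Lemma arc_prim (P K : C -> C) (r x y : R) : x <= y ->
  (forall t, x <= t <= y -> is_derive (K:=C_AbsRing) (V:=C_NormedModule) P (RtoC r * e t)%C (K (RtoC r * e t)%C)) ->
  (forall t, x <= t <= y -> continuous (T:=C_UniformSpace) (U:=C_UniformSpace) K (RtoC r * e t)%C) ->
  RInt (V:=C_R_CompleteNormedModule) (arcF K r) x y = (P (RtoC r * e y) - P (RtoC r * e x))%C.
Proof.
  intros Hxy HP HK. apply is_RInt_unique. unfold arcF.
  apply (path_FTC P K (fun t => RtoC r * e t)%C (fun t => Ci * RtoC r * e t)%C); auto.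
  intros; apply is_derive_arc. intros; apply cont_arcder.
Qed.

Lemma Jp_prim (P K : C -> C) a1 a2 b1 b2 : a1 <= a2 -> b1 <= b2 ->
  (forall z, is_derive (K:=C_AbsRing) (V:=C_NormedModule) P z (K z)) ->
  (forall z, continuous (T:=C_UniformSpace) (U:=C_UniformSpace) K z) ->
  Jp K a1 a2 b1 b2 = 0%C.
Proof.
  intros Ha Hb HP HK. unfold Jp, RadI, ArcI.
  rewrite (rad_prim P K b1 a1 a2), (rad_prim P K b2 a1 a2), (arc_prim P K a1 b1 b2), (arc_prim P K a2 b1 b2); auto.
  ring.
Qed.

Lemma Jp_minus K G a1 a2 b1 b2 : a1 <= a2 -> b1 <= b2 -> ContR K a1 a2 b1 b2 -> ContR G a1 a2 b1 b2 ->
  Jp (fun z => K z - G z)%C a1 a2 b1 b2 = (Jp K a1 a2 b1 b2 - Jp G a1 a2 b1 b2)%C.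
Proof.
  intros Ha Hb HK HG. unfold Jp, RadI, ArcI.
  assert (E1 : forall t, radF (fun z => K z - G z)%C t = fun r => (radF K t r - radF G t r)%C).
  { intros t. apply functional_extensionality. intros r. unfold radF. ring. }
  assert (E2 : forall r, arcF (fun z => K z - G z)%C r = fun t => (arcF K r t - arcF G r t)%C).
  { intros r. apply functional_extensionality. intros t. unfold arcF. ring. }
  rewrite !E1, !E2.
  rewrite (RInt_minusC (radF K b1) (radF G b1)) by (eapply ex_rad; [eassumption | lra ..]).
  rewrite (RInt_minusC (radF K b2) (radF G b2)) by (eapply ex_rad; [eassumption | lra ..]).
  rewrite (RInt_minusC (arcF K a1) (arcF G a1)) by (eapply ex_arc; [eassumption | lra ..]).
  rewrite (RInt_minusC (arcF K a2) (arcF G a2)) by (eapply ex_arc; [eassumption | lra ..]).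
  ring.
Qed.

Lemma Jp_bound K a1 a2 b1 b2 B : 0 <= a1 -> a1 <= a2 -> b1 <= b2 -> ContR K a1 a2 b1 b2 ->
  (forall r t, a1 <= r <= a2 -> b1 <= t <= b2 -> Cmod (K (RtoC r * e t)%C) <= B) ->
  Cmod (Jp K a1 a2 b1 b2) <= 2 * (a2 - a1) * B + 2 * (b2 - b1) * a2 * B.
Proof.
  intros H0 Ha Hb HK HB.
  assert (HB0 : 0 <= B). { specialize (HB a1 b1). pose proof (Cmod_ge_0 (K (RtoC a1 * e b1)%C)). assert (B >= Cmod (K (RtoC a1 * e b1)%C)) by (apply Rle_ge, HB; lra). lra. }
  assert (R1 : forall t, b1 <= t <= b2 -> Cmod (RadI K a1 a2 t) <= (a2 - a1) * B).
  { intros t Ht. eapply is_RInt_bound. exact Ha. 2: apply (RInt_correct (V:=C_R_CompleteNormedModule)); eapply ex_rad; eauto; lra.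
    intros r Hr. unfold radF. rewrite Cmod_mult, Cmod_e, Rmult_1_r. apply HB; lra. }
  assert (R2 : forall r, a1 <= r <= a2 -> Cmod (ArcI K r b1 b2) <= (b2 - b1) * (a2 * B)).
  { intros r Hr. eapply is_RInt_bound. exact Hb. 2: apply (RInt_correct (V:=C_R_CompleteNormedModule)); eapply ex_arc; eauto; lra.
    intros t Ht. unfold arcF. rewrite !Cmod_mult, Cmod_e, Cmod_Ci, Cmod_R, Rabs_right by lra.
    assert (Cmod (K (RtoC r * e t)%C) <= B) by (apply HB; lra). pose proof (Cmod_ge_0 (K (RtoC r * e t)%C)).
    replace (Cmod (K (RtoC r * e t)%C) * (1 * r * 1)) with (r * Cmod (K (RtoC r * e t)%C)) by ring.
    apply Rmult_le_compat; lra. }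
  unfold Jp.
  assert (T4 : forall x y z w : C, Cmod (x + y - z - w)%C <= Cmod x + Cmod y + Cmod z + Cmod w).
  { intros. eapply Rle_trans. apply Cmod_triangle. rewrite Cmod_opp.
    eapply Rle_trans. apply Rplus_le_compat_r. apply Cmod_triangle. rewrite Cmod_opp.
    eapply Rle_trans. apply Rplus_le_compat_r. apply Rplus_le_compat_r. apply Cmod_triangle. lra. }
  eapply Rle_trans. apply T4.
  pose proof (R1 b1 ltac:(lra)). pose proof (R1 b2 ltac:(lra)). pose proof (R2 a1 ltac:(lra)). pose proof (R2 a2 ltac:(lra)).
  replace (2 * (a2 - a1) * B + 2 * (b2 - b1) * a2 * B) with ((a2-a1)*B + (b2-b1)*(a2*B) + (a2-a1)*B + (b2-b1)*(a2*B)) by ring.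
  lra.
Qed.

Record rect := mkR { ra1 : R; ra2 : R; rb1 : R; rb2 : R }.

Definition JR (K : C -> C) (Q : rect) : C := Jp K (ra1 Q) (ra2 Q) (rb1 Q) (rb2 Q).
Definition mida Q := (ra1 Q + ra2 Q) / 2.
Definition midb Q := (rb1 Q + rb2 Q) / 2.
Definition s1 Q := mkR (ra1 Q) (mida Q) (rb1 Q) (midb Q).
Definition s2 Q := mkR (mida Q) (ra2 Q) (rb1 Q) (midb Q).
Definition s3 Q := mkR (ra1 Q) (mida Q) (midb Q) (rb2 Q).
Definition s4 Q := mkR (mida Q) (ra2 Q) (midb Q) (rb2 Q).

Definition step (K : C -> C) (Q : rect) : rect :=
  if Rle_dec (Cmod (JR K Q) / 4) (Cmod (JR K (s1 Q))) then s1 Q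
  else if Rle_dec (Cmod (JR K Q) / 4) (Cmod (JR K (s2 Q))) then s2 Q
  else if Rle_dec (Cmod (JR K Q) / 4) (Cmod (JR K (s3 Q))) then s3 Q
  else s4 Q.

Definition HalfSub (Q S : rect) : Prop :=
  ra1 Q <= ra1 S /\ ra2 S <= ra2 Q /\ rb1 Q <= rb1 S /\ rb2 S <= rb2 Q /\
  ra2 S - ra1 S = (ra2 Q - ra1 Q) / 2 /\ rb2 S - rb1 S = (rb2 Q - rb1 Q) / 2.

Lemma step_sub K Q : ra1 Q <= ra2 Q -> rb1 Q <= rb2 Q -> HalfSub Q (step K Q).
Proof.
  intros Ha Hb. unfold step.
  destruct (Rle_dec _ _); [|destruct (Rle_dec _ _); [|destruct (Rle_dec _ _)]];
  unfold HalfSub, s1, s2, s3, s4, mida, midb; simpl; lra.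
Qed.

Lemma step_big K Q : ContR K (ra1 Q) (ra2 Q) (rb1 Q) (rb2 Q) -> ra1 Q <= ra2 Q -> rb1 Q <= rb2 Q ->
  Cmod (JR K Q) / 4 <= Cmod (JR K (step K Q)).
Proof.
  intros HK Ha Hb. unfold step.
  destruct (Rle_dec _ _) as [H1|H1]; auto.
  destruct (Rle_dec _ _) as [H2|H2]; auto.
  destruct (Rle_dec _ _) as [H3|H3]; auto.
  assert (E := Jp_split K _ _ _ _ HK Ha Hb). simpl in E.
  unfold JR at 1. rewrite E.
  unfold JR, s1, s2, s3, s4, mida, midb in *; simpl in *.
  set (j1 := Jp K (ra1 Q) ((ra1 Q + ra2 Q) / 2) (rb1 Q) ((rb1 Q + rb2 Q) / 2)) in *.
  set (j2 := Jp K ((ra1 Q + ra2 Q) / 2) (ra2 Q) (rb1 Q) ((rb1 Q + rb2 Q) / 2)) in *.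
  set (j3 := Jp K (ra1 Q) ((ra1 Q + ra2 Q) / 2) ((rb1 Q + rb2 Q) / 2) (rb2 Q)) in *.
  set (j4 := Jp K ((ra1 Q + ra2 Q) / 2) (ra2 Q) ((rb1 Q + rb2 Q) / 2) (rb2 Q)) in *.
  rewrite E in H1, H2, H3.
  assert (T : Cmod (j1 + j2 + j3 + j4)%C <= Cmod j1 + Cmod j2 + Cmod j3 + Cmod j4).
  { eapply Rle_trans. apply Cmod_triangle. eapply Rle_trans. apply Rplus_le_compat_r. apply Cmod_triangle.
    eapply Rle_trans. apply Rplus_le_compat_r. apply Rplus_le_compat_r. apply Cmod_triangle. lra. }
  lra.
Qed.

Fixpoint seqR (K : C -> C) (Q : rect) (n : nat) : rect :=
  match n with O => Q | S m => step K (seqR K Q m) end.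

Lemma ContR_mono K a1 a2 b1 b2 c1 c2 d1 d2 : ContR K a1 a2 b1 b2 -> a1 <= c1 -> c2 <= a2 -> b1 <= d1 -> d2 <= b2 ->
  ContR K c1 c2 d1 d2.
Proof. intros H ? ? ? ? r t Hr Ht. apply H; lra. Qed.

Lemma seqR_props K Q n : ContR K (ra1 Q) (ra2 Q) (rb1 Q) (rb2 Q) -> ra1 Q <= ra2 Q -> rb1 Q <= rb2 Q ->
  let S := seqR K Q n in
  ra1 Q <= ra1 S /\ ra2 S <= ra2 Q /\ rb1 Q <= rb1 S /\ rb2 S <= rb2 Q /\
  ra2 S - ra1 S = (ra2 Q - ra1 Q) / 2 ^ n /\ rb2 S - rb1 S = (rb2 Q - rb1 Q) / 2 ^ n /\
  Cmod (JR K Q) / (2 ^ n * 2 ^ n) <= Cmod (JR K S).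
Proof.
  intros HK Ha Hb. induction n as [|n IH]; simpl.
  - repeat split; try lra; unfold Rdiv; rewrite ?Rmult_1_r, ?Rinv_1, ?Rmult_1_r; lra.
  - destruct IH as (I1 & I2 & I3 & I4 & I5 & I6 & I7).
    assert (P2 : 0 < 2 ^ n) by (apply pow_lt; lra).
    assert (W1 : 0 <= (ra2 Q - ra1 Q) / 2 ^ n) by (apply Rdiv_le_0_compat; lra).
    assert (W2 : 0 <= (rb2 Q - rb1 Q) / 2 ^ n) by (apply Rdiv_le_0_compat; lra).
    destruct (step_sub K (seqR K Q n)) as (S1 & S2 & S3 & S4 & S5 & S6); try lra.
    assert (HB := step_big K (seqR K Q n) ltac:(eapply ContR_mono; [exact HK| lra..]) ltac:(lra) ltac:(lra)).
    repeat split; try lra.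
    + rewrite S5, I5. field. lra.
    + rewrite S6, I6. field. lra.
    + eapply Rle_trans. 2: exact HB.
      replace (Cmod (JR K Q) / (2 * 2 ^ n * (2 * 2 ^ n))) with ((Cmod (JR K Q) / (2 ^ n * 2 ^ n)) / 4) by (field; lra).
      lra.
Qed.

Lemma seqR_nested K Q n k : ContR K (ra1 Q) (ra2 Q) (rb1 Q) (rb2 Q) -> ra1 Q <= ra2 Q -> rb1 Q <= rb2 Q ->
  ra1 (seqR K Q n) <= ra1 (seqR K Q (n + k)) /\ ra2 (seqR K Q (n + k)) <= ra2 (seqR K Q n) /\
  rb1 (seqR K Q n) <= rb1 (seqR K Q (n + k)) /\ rb2 (seqR K Q (n + k)) <= rb2 (seqR K Q n).
Proof.
  intros HK Ha Hb. induction k as [|k IH].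
  - rewrite Nat.add_0_r. lra.
  - rewrite Nat.add_succ_r. simpl.
    destruct (seqR_props K Q (n + k) HK Ha Hb) as (_ & _ & _ & _ & W1 & W2 & _).
    assert (P2 : 0 < 2 ^ (n + k)) by (apply pow_lt; lra).
    assert (0 <= (ra2 Q - ra1 Q) / 2 ^ (n + k)) by (apply Rdiv_le_0_compat; lra).
    assert (0 <= (rb2 Q - rb1 Q) / 2 ^ (n + k)) by (apply Rdiv_le_0_compat; lra).
    destruct (step_sub K (seqR K Q (n + k))) as (S1 & S2 & S3 & S4 & _ & _); lra.
Qed.

Lemma lim_exists (u v : nat -> R) : (forall n m, u m <= v n) -> exists x, forall n, u n <= x <= v n.
Proof.
  intros H.
  assert (Hb : bound (fun x => exists n, x = u n)).
  { exists (v O). intros x [n ->]. apply H. }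
  assert (He : exists x, (fun x => exists n, x = u n) x) by (exists (u O); exists O; reflexivity).
  destruct (completeness _ Hb He) as [m [Hub Hlub]].
  exists m. intros n. split.
  - apply Hub. exists n. reflexivity.
  - apply Hlub. intros x [k ->]. apply H.
Qed.

Lemma pow2_large (d delta : R) : 0 < delta -> exists n, d / 2 ^ n < delta.
Proof.
  intros Hd. destruct (archimed (d / delta)) as [H1 _].
  destruct (Rle_or_lt 0 (IZR (up (d / delta)))) as [H0|H0].
  - exists (Z.to_nat (up (d / delta))).
    assert (HP : 0 < 2 ^ Z.to_nat (up (d / delta))) by (apply pow_lt; lra).
    assert (HN : INR (Z.to_nat (up (d / delta))) < 2 ^ Z.to_nat (up (d / delta))).
    { clear. induction (Z.to_nat (up (d / delta))) as [|k IH]. simpl. lra.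
      rewrite S_INR. simpl. assert (1 <= 2 ^ k) by (apply pow_R1_Rle; lra). lra. }
    rewrite INR_IZR_INZ, Z2Nat.id in HN. 2: { apply le_IZR. lra. }
    apply (Rmult_lt_reg_r (2 ^ Z.to_nat (up (d / delta)))); auto.
    unfold Rdiv at 1. rewrite Rmult_assoc, Rinv_l, Rmult_1_r by lra.
    assert (d < delta * IZR (up (d / delta))).
    { apply (Rmult_lt_reg_r (/ delta)). apply Rinv_0_lt_compat; lra.
      replace (delta * IZR (up (d / delta)) * / delta) with (IZR (up (d / delta))) by (field; lra). exact H1. }
    nra.
  - exists O. simpl. unfold Rdiv. rewrite Rinv_1, Rmult_1_r.
    assert (d / delta < 0) by lra.
    assert (d < 0). { destruct (Rle_or_lt 0 d); auto. assert (0 <= d / delta) by (apply Rdiv_le_0_compat; lra). lra. }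
    lra.
Qed.

Definition HolR (K : C -> C) (a1 a2 b1 b2 : R) : Prop :=
  forall r t, a1 <= r <= a2 -> b1 <= t <= b2 -> ex_derive (K:=C_AbsRing) (V:=C_NormedModule) K (RtoC r * e t)%C.

Lemma HolR_ContR K a1 a2 b1 b2 : HolR K a1 a2 b1 b2 -> ContR K a1 a2 b1 b2.
Proof. intros H r t Hr Ht. apply ex_derive_contC. apply H; auto. Qed.

Lemma contC_affine (c L z0 : C) (z : C) : continuous (T:=C_UniformSpace) (U:=C_UniformSpace) (fun w => c + L * (w - z0))%C z.
Proof.
  apply contC_plus. apply contC_const. apply contC_mult. apply contC_const.
  apply contC_minus. apply continuous_id. apply contC_const.
Qed.

Theorem goursat K a1 a2 b1 b2 : 0 <= a1 -> a1 <= a2 -> b1 <= b2 -> HolR K a1 a2 b1 b2 ->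
  Jp K a1 a2 b1 b2 = 0%C.
Proof.
  intros H0 Ha Hb HH.
  set (Q := mkR a1 a2 b1 b2).
  assert (HK : ContR K (ra1 Q) (ra2 Q) (rb1 Q) (rb2 Q)) by (apply HolR_ContR; exact HH).
  change (JR K Q = 0%C).
  destruct (Req_dec (Cmod (JR K Q)) 0) as [HJ|HJ]. { apply Cmod_eq_0. exact HJ. }
  exfalso. set (J0 := Cmod (JR K Q)).
  assert (HJ0 : 0 < J0) by (pose proof (Cmod_ge_0 (JR K Q)); unfold J0; lra).
  assert (Ha' : ra1 Q <= ra2 Q) by (simpl; lra). assert (Hb' : rb1 Q <= rb2 Q) by (simpl; lra).
  destruct (lim_exists (fun n => ra1 (seqR K Q n)) (fun n => ra2 (seqR K Q n))) as [rs Hrs].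
  { intros n m.
    destruct (seqR_nested K Q m n HK Ha' Hb') as (N1 & _ & _ & _).
    destruct (seqR_nested K Q n m HK Ha' Hb') as (_ & N2 & _ & _).
    destruct (seqR_props K Q (m + n) HK Ha' Hb') as (_ & _ & _ & _ & W1 & _).
    rewrite Nat.add_comm in N2.
    assert (0 <= (ra2 Q - ra1 Q) / 2 ^ (m + n)) by (apply Rdiv_le_0_compat; [lra | apply pow_lt; lra]).
    lra. }
  destruct (lim_exists (fun n => rb1 (seqR K Q n)) (fun n => rb2 (seqR K Q n))) as [ts Hts].
  { intros n m.
    destruct (seqR_nested K Q m n HK Ha' Hb') as (_ & _ & N1 & _).
    destruct (seqR_nested K Q n m HK Ha' Hb') as (_ & _ & _ & N2).
    destruct (seqR_props K Q (m + n) HK Ha' Hb') as (_ & _ & _ & _ & _ & W1 & _).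
    rewrite Nat.add_comm in N2.
    assert (0 <= (rb2 Q - rb1 Q) / 2 ^ (m + n)) by (apply Rdiv_le_0_compat; [lra | apply pow_lt; lra]).
    lra. }
  assert (Hrs0 := Hrs O). assert (Hts0 := Hts O). simpl in Hrs0, Hts0.
  set (zs := (RtoC rs * e ts)%C).
  destruct (HH rs ts ltac:(lra) ltac:(lra)) as [L HL].
  set (W := a2 - a1). set (Hh := b2 - b1). set (d0 := W + a2 * Hh).
  assert (Hd0 : 0 <= d0) by (unfold d0, W, Hh; nra).
  set (eps := J0 / (4 * (d0 * d0 + 1))).
  assert (Heps : 0 < eps) by (unfold eps; apply Rdiv_lt_0_compat; nra).
  destruct HL as [_ Hdom].
  assert (Hflim : is_filter_lim (locally (T:=AbsRing_UniformSpace C_AbsRing) zs) zs) by (intros P HP; exact HP).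
  destruct (Hdom zs Hflim (mkposreal eps Heps)) as [delta Hdelta]. simpl in Hdelta.
  destruct (pow2_large d0 delta (cond_pos delta)) as [n Hn].
  set (Sn := seqR K Q n).
  destruct (seqR_props K Q n HK Ha' Hb') as (P1 & P2 & P3 & P4 & P5 & P6 & P7).
  fold Sn in P1, P2, P3, P4, P5, P6, P7. simpl in P1, P2, P3, P4, P5, P6.
  assert (Hpow : 0 < 2 ^ n) by (apply pow_lt; lra).
  set (dn := d0 / 2 ^ n).
  assert (Hdn : dn = (ra2 Sn - ra1 Sn) + a2 * (rb2 Sn - rb1 Sn)).
  { unfold dn, d0, W, Hh. rewrite P5, P6. field. lra. }
  assert (Hrn := Hrs n). assert (Htn := Hts n). fold Sn in Hrn, Htn.
  set (Aff := fun w => (K zs + L * (w - zs))%C).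
  set (Dd := fun w => (K w - Aff w)%C).
  assert (HKn : ContR K (ra1 Sn) (ra2 Sn) (rb1 Sn) (rb2 Sn)) by (eapply ContR_mono; [exact HK | simpl; lra ..]).
  assert (HAn : ContR Aff (ra1 Sn) (ra2 Sn) (rb1 Sn) (rb2 Sn)) by (intros r t _ _; apply contC_affine).
  assert (EJ : JR K Sn = Jp Dd (ra1 Sn) (ra2 Sn) (rb1 Sn) (rb2 Sn)).
  { unfold Dd. rewrite Jp_minus; try lra; auto.
    rewrite (Jp_prim (fun w => (K zs - L * zs) * w + (L / 2) * (w * w))%C Aff); try lra.
    - unfold JR. ring.
    - intros z. replace (Aff z) with ((K zs - L * zs) + (L / 2) * (2 * z))%C.
      apply deriv_quad. unfold Aff. field.
    - intros z. apply contC_affine. }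
  assert (Hbd : forall r t, ra1 Sn <= r <= ra2 Sn -> rb1 Sn <= t <= rb2 Sn -> Cmod (Dd (RtoC r * e t)%C) <= eps * dn).
  { intros r t Hr Ht.
    assert (Hdist : Cmod (RtoC r * e t - zs)%C <= dn).
    { unfold zs. eapply Rle_trans. apply polar_lip. lra.
      rewrite Hdn. assert (Rabs (r - rs) <= ra2 Sn - ra1 Sn) by (apply Rabs_le; lra).
      assert (Rabs (t - ts) <= rb2 Sn - rb1 Sn) by (apply Rabs_le; lra).
      assert (0 <= Rabs (t - ts)) by apply Rabs_pos. nra. }
    assert (Hlt : Cmod (RtoC r * e t - zs)%C < delta) by (unfold dn in Hdist; lra).
    specialize (Hdelta (RtoC r * e t)%C Hlt).
    unfold Dd, Aff.
    change (Cmod (K (RtoC r * e t)%C - K zs - (RtoC r * e t - zs) * L)%C <= eps * Cmod (RtoC r * e t - zs)%C) in Hdelta.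
    replace (K (RtoC r * e t)%C - (K zs + L * (RtoC r * e t - zs)))%C with (K (RtoC r * e t)%C - K zs - (RtoC r * e t - zs) * L)%C by ring.
    eapply Rle_trans. exact Hdelta. apply Rmult_le_compat_l; lra. }
  assert (HDn : ContR Dd (ra1 Sn) (ra2 Sn) (rb1 Sn) (rb2 Sn)).
  { intros r t Hr Ht. unfold Dd. apply contC_minus. apply HKn; auto. apply HAn; auto. }
  assert (Hb1 := Jp_bound Dd (ra1 Sn) (ra2 Sn) (rb1 Sn) (rb2 Sn) (eps * dn) ltac:(lra) ltac:(lra) ltac:(lra) HDn Hbd).
  rewrite <- EJ in Hb1.
  assert (Hdn0 : 0 <= dn) by (unfold dn; apply Rdiv_le_0_compat; lra).
  assert (Hb2 : Cmod (JR K Sn) <= 2 * eps * dn * dn).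
  { eapply Rle_trans. exact Hb1. rewrite Hdn at 3 4.
    assert (0 <= rb2 Sn - rb1 Sn) by lra.
    assert (0 <= eps * dn) by nra.
    assert ((rb2 Sn - rb1 Sn) * ra2 Sn * (eps * dn) <= (rb2 Sn - rb1 Sn) * a2 * (eps * dn)).
    { apply Rmult_le_compat_r; auto. apply Rmult_le_compat_l; lra. }
    nra. }
  assert (Hfin : J0 / (2 ^ n * 2 ^ n) <= 2 * eps * (d0 * d0) / (2 ^ n * 2 ^ n)).
  { eapply Rle_trans. exact P7. eapply Rle_trans. exact Hb2. unfold dn. right. field. lra. }
  assert (Hfin2 : J0 <= 2 * eps * (d0 * d0)).
  { apply (Rmult_le_reg_r (/ (2 ^ n * 2 ^ n))). apply Rinv_0_lt_compat; nra. exact Hfin. }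
  unfold eps in Hfin2.
  assert (2 * (J0 / (4 * (d0 * d0 + 1))) * (d0 * d0) < J0).
  { unfold Rdiv. 
    replace (2 * (J0 * / (4 * (d0 * d0 + 1))) * (d0 * d0)) with (J0 * (d0 * d0 / (2 * (d0 * d0 + 1)))) by (field; nra).
    assert (d0 * d0 / (2 * (d0 * d0 + 1)) < 1).
    { apply (Rmult_lt_reg_r (2 * (d0 * d0 + 1))). nra. unfold Rdiv. rewrite Rmult_assoc, Rinv_l by nra. nra. }
    nra. }
  lra.
Qed.

Notation exdC := (ex_derive (K:=C_AbsRing) (V:=C_NormedModule)).
Notation isdC := (is_derive (K:=C_AbsRing) (V:=C_NormedModule)).

Lemma isdC_inv (z : C) : z <> 0%C -> isdC Cinv z (- / (z * z))%C.
Proof.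
  intros Hz. split. apply is_linear_scal_l.
  intros x Hx. assert (Hxz : x = z).
  { symmetry. apply (is_filter_lim_locally_unique (K:=C_AbsRing) (V:=AbsRing_NormedModule C_AbsRing)). exact Hx. }
  subst x. intros eps.
  assert (Hm : 0 < Cmod z) by (apply Cmod_gt_0; exact Hz).
  set (d := Rmin (Cmod z / 2) (eps * (Cmod z * Cmod z * Cmod z) / 2)).
  assert (He : 0 < eps) by apply cond_pos.
  assert (Hd : 0 < d) by (unfold d; apply Rmin_pos; [lra | apply Rdiv_lt_0_compat; [apply Rmult_lt_0_compat; [lra | apply Rmult_lt_0_compat; nra] | lra]]).
  exists (mkposreal d Hd). intros y Hy. change (Cmod (y - z)%C < d) in Hy.
  change (Cmod (/ y - / z - (y - z) * (- / (z * z)))%C <= eps * Cmod (y - z)%C).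
  assert (Hy1 : Cmod y >= Cmod z / 2).
  { assert (Cmod z <= Cmod y + Cmod (y - z)%C).
    { replace z with (y - (y - z))%C at 1 by ring. eapply Rle_trans. apply Cmod_triangle. rewrite Cmod_opp. lra. }
    assert (d <= Cmod z / 2) by apply Rmin_l. lra. }
  assert (Hy0 : (y : C) <> 0%C) by (intro E; rewrite E, Cmod_0 in Hy1; lra).
  replace (/ y - / z - (y - z) * (- / (z * z)))%C with ((y - z) * (y - z) / (y * (z * z)))%C by (field; auto).
  rewrite Cmod_div, !Cmod_mult. 2: { apply Cmult_neq_0; auto. apply Cmult_neq_0; auto. }
  assert (Hd2 : d <= eps * (Cmod z * Cmod z * Cmod z) / 2) by apply Rmin_r.
  pose proof (Cmod_ge_0 (y - z)%C).
  apply (Rmult_le_reg_r (Cmod y * (Cmod z * Cmod z))). { assert (0 < Cmod z * Cmod z) by nra. apply Rmult_lt_0_compat; lra. }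
  assert (Hpos : Cmod y * (Cmod z * Cmod z) <> 0) by (assert (0 < Cmod z * Cmod z) by nra; apply Rgt_not_eq; apply Rmult_lt_0_compat; lra).
  unfold Rdiv. rewrite Rmult_assoc, Rinv_l, Rmult_1_r by exact Hpos.
  destruct eps as [eps Heps]; simpl in *.
  assert (Cmod (y - z)%C * Cmod (y - z)%C <= Cmod (y - z)%C * (eps * (Cmod z * Cmod z * Cmod z) / 2)) by (apply Rmult_le_compat_l; lra).
  assert (eps * (Cmod z * Cmod z * Cmod z) / 2 <= eps * (Cmod y * (Cmod z * Cmod z))).
  { assert (0 < Cmod z * Cmod z) by nra.
    replace (eps * (Cmod z * Cmod z * Cmod z) / 2) with (eps * ((Cmod z / 2) * (Cmod z * Cmod z))) by field.
    apply Rmult_le_compat_l. lra. apply Rmult_le_compat_r; lra. }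
  assert (Cmod (y - z)%C * (eps * (Cmod z * Cmod z * Cmod z) / 2) <= Cmod (y - z)%C * (eps * (Cmod y * (Cmod z * Cmod z)))) by (apply Rmult_le_compat_l; lra).
  lra.
Qed.

Lemma exdC_id (z : C) : exdC (fun w => w) z.
Proof. exists one. apply derive_abs_C. apply (is_derive_id (K:=C_AbsRing)). Qed.

Lemma exdC_const (c : C) (z : C) : exdC (fun _ => c) z.
Proof. exists zero. apply derive_abs_C. apply (is_derive_const (K:=C_AbsRing) (V:=AbsRing_NormedModule C_AbsRing)). Qed.

Lemma exdC_plus (f g : C -> C) (z : C) : exdC f z -> exdC g z -> exdC (fun w => f w + g w)%C z.
Proof. intros [a Ha] [b Hb]. exists (plus a b). apply (is_derive_plus f g z a b Ha Hb). Qed.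

Lemma exdC_minus (f g : C -> C) (z : C) : exdC f z -> exdC g z -> exdC (fun w => f w - g w)%C z.
Proof. intros [a Ha] [b Hb]. exists (minus a b). apply (is_derive_minus f g z a b Ha Hb). Qed.

Lemma exdC_mult (f g : C -> C) (z : C) : exdC f z -> exdC g z -> exdC (fun w => f w * g w)%C z.
Proof.
  intros [a Ha] [b Hb]. eexists. apply derive_abs_C.
  apply (is_derive_mult (K:=C_AbsRing) f g z a b); try (apply derive_C_abs; assumption).
  exact Cmult_comm.
Qed.

Lemma exdC_comp (f g : C -> C) (z : C) : exdC g z -> exdC f (g z) -> exdC (fun w => f (g w)) z.
Proof.
  intros [a Ha] [b Hb]. eexists. apply (is_derive_comp (K:=C_AbsRing) (V:=C_NormedModule) f g z b a Hb).
  apply derive_C_abs. exact Ha.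
Qed.

Lemma exdC_inv (f : C -> C) (z : C) : exdC f z -> f z <> 0%C -> exdC (fun w => / f w)%C z.
Proof.
  intros Hf Hz. apply (exdC_comp Cinv f z Hf). eexists. apply isdC_inv. exact Hz.
Qed.

Lemma exdC_div (f g : C -> C) (z : C) : exdC f z -> exdC g z -> g z <> 0%C -> exdC (fun w => f w / g w)%C z.
Proof. intros Hf Hg Hz. apply exdC_mult. exact Hf. apply exdC_inv; auto. Qed.

Lemma exdC_pow (f : C -> C) (z : C) (n : nat) : exdC f z -> exdC (fun w => (f w) ^ n)%C z.
Proof.
  intros Hf. induction n as [|n IH]; simpl. apply exdC_const. apply exdC_mult; auto.
Qed.

Lemma exdC_ext_loc (f g : C -> C) (z : C) : locally (T:=AbsRing_UniformSpace C_AbsRing) z (fun w => f w = g w) -> exdC f z -> exdC g z.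
Proof. intros H [a Ha]. exists a. eapply is_derive_ext_loc; eauto. Qed.

Lemma locC_ball (z : C) (d : R) (P : C -> Prop) : 0 < d -> (forall w, Cmod (w - z)%C < d -> P w) ->
  locally (T:=AbsRing_UniformSpace C_AbsRing) z P.
Proof. intros Hd H. exists (mkposreal d Hd). intros y Hy. apply H. exact Hy. Qed.

Lemma cont_eps (K : C -> C) (z : C) : continuous (T:=C_UniformSpace) (U:=C_UniformSpace) K z ->
  forall eps, 0 < eps -> exists d, 0 < d /\ forall w, Cmod (w - z)%C < d -> Cmod (K w - K z)%C < eps.
Proof.
  intros H eps Heps.
  assert (He2 : 0 < eps / 2) by lra.
  assert (Hl := H (ball (K z) (mkposreal _ He2)) (locally_ball _ _)).
  apply locC_prod_abs in Hl. destruct Hl as [d Hd].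
  exists d. split. apply cond_pos. intros w Hw. specialize (Hd w Hw).
  destruct Hd as [H1 H2]. simpl in H1, H2.
  change (Rabs (fst (K w) - fst (K z)) < eps / 2) in H1.
  change (Rabs (snd (K w) - snd (K z)) < eps / 2) in H2.
  eapply Rle_lt_trans. apply Cmod_le_abs. destruct (K w), (K z); simpl in *. unfold Rminus in *. lra.
Qed.

Definition CIc (K : C -> C) (rho c : R) : C := ArcI K rho c (c + 2 * PI).

Lemma e_period (c : R) : e (c + 2 * PI) = e c.
Proof.
  unfold e. rewrite cos_plus, sin_plus, cos_2PI, sin_2PI. apply injective_projections; simpl; ring.
Qed.

Lemma Cmod_polar (r t : R) : 0 <= r -> Cmod (RtoC r * e t)%C = r.
Proof. intros H. rewrite Cmod_mult, Cmod_R, Cmod_e, Rabs_right by lra. ring. Qed.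

Lemma Jp_splitA K a1 m a2 b1 b2 : ContR K a1 a2 b1 b2 -> a1 <= m <= a2 -> b1 <= b2 ->
  Jp K a1 a2 b1 b2 = (Jp K a1 m b1 b2 + Jp K m a2 b1 b2)%C.
Proof.
  intros HK Hm Hb. unfold Jp, RadI, ArcI.
  rewrite (RInt_ChaslesC (radF K b1) a1 m a2) by (eapply ex_rad; [eassumption | lra ..]).
  rewrite (RInt_ChaslesC (radF K b2) a1 m a2) by (eapply ex_rad; [eassumption | lra ..]).
  ring.
Qed.

Lemma Jp_splitB K a1 a2 b1 m b2 : ContR K a1 a2 b1 b2 -> a1 <= a2 -> b1 <= m <= b2 ->
  Jp K a1 a2 b1 b2 = (Jp K a1 a2 b1 m + Jp K a1 a2 m b2)%C.
Proof.
  intros HK Ha Hm. unfold Jp, RadI, ArcI.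
  rewrite (RInt_ChaslesC (arcF K a1) b1 m b2) by (eapply ex_arc; [eassumption | lra ..]).
  rewrite (RInt_ChaslesC (arcF K a2) b1 m b2) by (eapply ex_arc; [eassumption | lra ..]).
  ring.
Qed.

Lemma goursat_pt K a1 a2 b1 b2 r0 t0 : 0 <= a1 -> a1 < r0 < a2 -> b1 < t0 < b2 ->
  ContR K a1 a2 b1 b2 ->
  (forall r t, a1 <= r <= a2 -> b1 <= t <= b2 -> (r <> r0 \/ t <> t0) -> exdC K (RtoC r * e t)%C) ->
  Jp K a1 a2 b1 b2 = 0%C.
Proof.
  intros H0 Hr0 Ht0 HK HH.
  set (z0 := (RtoC r0 * e t0)%C).
  destruct (cont_eps K z0 (HK r0 t0 ltac:(lra) ltac:(lra)) 1 ltac:(lra)) as [d [Hd Hcont]].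
  set (B := Cmod (K z0) + 1).
  assert (HB0 : 0 < B) by (unfold B; pose proof (Cmod_ge_0 (K z0)); lra).
  assert (key : forall h, 0 < h -> h < 1 -> h * (1 + r0) < d -> a1 < r0 - h -> r0 + h < a2 -> b1 < t0 - h -> t0 + h < b2 ->
    Cmod (Jp K a1 a2 b1 b2) <= 4 * h * B * (2 + r0)).
  { intros h Hh Hh1 Hhd Ha1 Ha2 Hb1 Hb2.
    assert (Sub : forall c1 c2 d1 d2, a1 <= c1 -> c1 <= c2 -> c2 <= a2 -> b1 <= d1 -> d1 <= d2 -> d2 <= b2 -> ContR K c1 c2 d1 d2)
      by (intros; eapply ContR_mono; [exact HK | lra ..]).
    assert (Zc : forall c1 c2 d1 d2, a1 <= c1 -> c1 <= c2 -> c2 <= a2 -> b1 <= d1 -> d1 <= d2 -> d2 <= b2 ->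
                  (c2 < r0 \/ r0 < c1 \/ d2 < t0 \/ t0 < d1) -> Jp K c1 c2 d1 d2 = 0%C).
    { intros c1 c2 d1 d2 ? ? ? ? ? ? Hout. apply goursat; try lra.
      intros r t Hr Ht. apply HH. lra. lra. destruct Hout as [?|[?|[?|?]]]; [left|left|right|right]; lra. }
    rewrite (Jp_splitA K a1 (r0 - h) a2 b1 b2 HK ltac:(lra) ltac:(lra)).
    rewrite (Jp_splitA K (r0 - h) (r0 + h) a2 b1 b2) by (try apply Sub; lra).
    rewrite (Zc a1 (r0 - h) b1 b2) by lra.
    rewrite (Zc (r0 + h) a2 b1 b2) by lra.
    rewrite (Jp_splitB K (r0 - h) (r0 + h) b1 (t0 - h) b2) by (try apply Sub; lra).
    rewrite (Jp_splitB K (r0 - h) (r0 + h) (t0 - h) (t0 + h) b2) by (try apply Sub; lra).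
    rewrite (Zc (r0 - h) (r0 + h) b1 (t0 - h)) by lra.
    rewrite (Zc (r0 - h) (r0 + h) (t0 + h) b2) by lra.
    replace (0 + (0 + (Jp K (r0 - h) (r0 + h) (t0 - h) (t0 + h) + 0) + 0))%C with (Jp K (r0 - h) (r0 + h) (t0 - h) (t0 + h)) by ring.
    eapply Rle_trans. apply (Jp_bound K (r0 - h) (r0 + h) (t0 - h) (t0 + h) B); try lra.
    - apply Sub; lra.
    - intros r t Hr Ht.
      assert (Hdist : Cmod (RtoC r * e t - z0)%C < d).
      { unfold z0. eapply Rle_lt_trans. apply polar_lip. lra.
        assert (Rabs (r - r0) <= h) by (apply Rabs_le; lra).
        assert (Rabs (t - t0) <= h) by (apply Rabs_le; lra).
        assert (r0 * Rabs (t - t0) <= r0 * h) by (apply Rmult_le_compat_l; lra). nra. }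
      specialize (Hcont _ Hdist). unfold B.
      assert (Cmod (K (RtoC r * e t)%C) <= Cmod (K (RtoC r * e t) - K z0)%C + Cmod (K z0)).
      { replace (K (RtoC r * e t)%C) with ((K (RtoC r * e t) - K z0) + K z0)%C at 1 by ring. apply Cmod_triangle. }
      lra.
    - replace (r0 + h - (r0 - h)) with (2 * h) by ring. replace (t0 + h - (t0 - h)) with (2 * h) by ring.
      assert (0 <= h * B) by nra. nra. }
  destruct (Req_dec (Cmod (Jp K a1 a2 b1 b2)) 0) as [E|E]. { apply Cmod_eq_0. exact E. }
  exfalso. set (J := Cmod (Jp K a1 a2 b1 b2)).
  assert (HJ : 0 < J) by (pose proof (Cmod_ge_0 (Jp K a1 a2 b1 b2)); unfold J; lra).
  set (h0 := Rmin (Rmin (Rmin (r0 - a1) (a2 - r0)) (Rmin (t0 - b1) (b2 - t0))) (Rmin 1 (d / (1 + r0)))).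
  assert (Hh0 : 0 < h0).
  { unfold h0. repeat apply Rmin_pos; try lra. apply Rdiv_lt_0_compat; lra. }
  set (h := Rmin (h0 / 2) (J / (8 * B * (2 + r0)))).
  assert (Hh : 0 < h) by (unfold h; apply Rmin_pos; [lra | apply Rdiv_lt_0_compat; [lra | nra]]).
  assert (Hhh0 : h <= h0 / 2) by apply Rmin_l.
  assert (HhJ : h <= J / (8 * B * (2 + r0))) by apply Rmin_r.
  assert (Hm1 : h0 <= Rmin (Rmin (r0 - a1) (a2 - r0)) (Rmin (t0 - b1) (b2 - t0))) by apply Rmin_l.
  assert (Hm2 : h0 <= Rmin 1 (d / (1 + r0))) by apply Rmin_r.
  assert (h0 <= r0 - a1 /\ h0 <= a2 - r0 /\ h0 <= t0 - b1 /\ h0 <= b2 - t0 /\ h0 <= 1 /\ h0 <= d / (1 + r0)) as (M1 & M2 & M3 & M4 & M5 & M6).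
  { pose proof (Rmin_l (Rmin (r0 - a1) (a2 - r0)) (Rmin (t0 - b1) (b2 - t0))).
    pose proof (Rmin_r (Rmin (r0 - a1) (a2 - r0)) (Rmin (t0 - b1) (b2 - t0))).
    pose proof (Rmin_l (r0 - a1) (a2 - r0)). pose proof (Rmin_r (r0 - a1) (a2 - r0)).
    pose proof (Rmin_l (t0 - b1) (b2 - t0)). pose proof (Rmin_r (t0 - b1) (b2 - t0)).
    pose proof (Rmin_l 1 (d / (1 + r0))). pose proof (Rmin_r 1 (d / (1 + r0))). lra. }
  assert (Hhd : h * (1 + r0) < d).
  { assert (h < d / (1 + r0)) by lra.
    apply (Rmult_lt_compat_r (1 + r0)) in H; [| lra]. replace (d / (1 + r0) * (1 + r0)) with d in H by (field; lra). exact H. }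
  specialize (key h Hh ltac:(lra) Hhd ltac:(lra) ltac:(lra) ltac:(lra) ltac:(lra)).
  assert (4 * h * B * (2 + r0) <= J / 2).
  { apply (Rmult_le_compat_r (8 * B * (2 + r0))) in HhJ; [| nra].
    replace (J / (8 * B * (2 + r0)) * (8 * B * (2 + r0))) with J in HhJ by (field; nra). nra. }
  fold J in key. lra.
Qed.

Lemma CIc_annulus_gen K r1 r2 c : 0 <= r1 <= r2 -> Jp K r1 r2 c (c + 2 * PI) = 0%C -> CIc K r1 c = CIc K r2 c.
Proof.
  intros Hr HJ. unfold Jp, CIc in *.
  assert (E : radF K (c + 2 * PI) = radF K c).
  { apply functional_extensionality. intros r. unfold radF. rewrite e_period. reflexivity. }
  unfold RadI in HJ. rewrite E in HJ.
  set (X := RInt (V:=C_R_CompleteNormedModule) (radF K c) r1 r2) in HJ.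
  apply (f_equal (fun w => (w - X + X + ArcI K r1 c (c + 2 * PI))%C)) in HJ.
  replace (X + ArcI K r2 c (c + 2 * PI) - X - ArcI K r1 c (c + 2 * PI) - X + X + ArcI K r1 c (c + 2 * PI))%C
    with (ArcI K r2 c (c + 2 * PI)) in HJ by ring.
  rewrite HJ. ring.
Qed.

Lemma CIc_annulus K r1 r2 c : 0 <= r1 <= r2 -> HolR K r1 r2 c (c + 2 * PI) -> CIc K r1 c = CIc K r2 c.
Proof.
  intros Hr HH. apply CIc_annulus_gen; auto. apply goursat; try lra.
  pose proof PI_RGT_0; lra. exact HH.
Qed.

Lemma CIc_annulus_pt K r1 r2 c r0 t0 : 0 <= r1 -> r1 < r0 < r2 -> c < t0 < c + 2 * PI ->
  ContR K r1 r2 c (c + 2 * PI) ->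
  (forall r t, r1 <= r <= r2 -> c <= t <= c + 2 * PI -> (r <> r0 \/ t <> t0) -> exdC K (RtoC r * e t)%C) ->
  CIc K r1 c = CIc K r2 c.
Proof.
  intros H0 Hr Ht HK HH. apply CIc_annulus_gen. lra.
  apply (goursat_pt K r1 r2 c (c + 2 * PI) r0 t0); auto.
Qed.

Lemma CIc_bound K rho c B : 0 <= rho -> ContR K rho rho c (c + 2 * PI) ->
  (forall t, c <= t <= c + 2 * PI -> Cmod (K (RtoC rho * e t)%C) <= B) ->
  Cmod (CIc K rho c) <= 2 * PI * rho * B.
Proof.
  intros Hr HK HB. unfold CIc, ArcI.
  pose proof PI_RGT_0.
  replace (2 * PI * rho * B) with ((c + 2 * PI - c) * (rho * B)) by ring.
  eapply is_RInt_bound. lra. 2: apply (RInt_correct (V:=C_R_CompleteNormedModule)); eapply ex_arc; [exact HK | lra ..].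
  intros t Ht. unfold arcF. rewrite !Cmod_mult, Cmod_e, Cmod_Ci, Cmod_R, Rabs_right by lra.
  specialize (HB t Ht). pose proof (Cmod_ge_0 (K (RtoC rho * e t)%C)).
  replace (Cmod (K (RtoC rho * e t)%C) * (1 * rho * 1)) with (rho * Cmod (K (RtoC rho * e t)%C)) by ring.
  apply Rmult_le_compat_l; lra.
Qed.

Lemma CIc_plus K G rho c : ContR K rho rho c (c + 2 * PI) -> ContR G rho rho c (c + 2 * PI) ->
  CIc (fun z => K z + G z)%C rho c = (CIc K rho c + CIc G rho c)%C.
Proof.
  intros HK HG. pose proof PI_RGT_0. unfold CIc, ArcI.
  assert (E : arcF (fun z => K z + G z)%C rho = fun t => (arcF K rho t + arcF G rho t)%C).
  { apply functional_extensionality. intros t. unfold arcF. ring. }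
  rewrite E. apply (RInt_plus (V:=C_R_CompleteNormedModule)).
  apply (ex_arc K rho rho c (c + 2 * PI)); auto; lra.
  apply (ex_arc G rho rho c (c + 2 * PI)); auto; lra.
Qed.

Lemma CIc_scal K rho c (w : C) : ContR K rho rho c (c + 2 * PI) ->
  CIc (fun z => w * K z)%C rho c = (w * CIc K rho c)%C.
Proof.
  intros HK. pose proof PI_RGT_0. unfold CIc, ArcI.
  assert (E : arcF (fun z => w * K z)%C rho = fun t => (w * arcF K rho t)%C).
  { apply functional_extensionality. intros t. unfold arcF. ring. }
  rewrite E. apply (is_RInt_unique (V:=C_R_CompleteNormedModule)). apply is_RInt_Cmul. apply (RInt_correct (V:=C_R_CompleteNormedModule)).
  apply (ex_arc K rho rho c (c + 2 * PI)); auto; lra.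
Qed.

Lemma CIc_ext K G rho c : (forall t, c <= t <= c + 2 * PI -> K (RtoC rho * e t)%C = G (RtoC rho * e t)%C) ->
  CIc K rho c = CIc G rho c.
Proof.
  intros H. pose proof PI_RGT_0. unfold CIc, ArcI. apply (RInt_ext (V:=C_R_CompleteNormedModule)). intros x Hx.
  rewrite Rmin_left, Rmax_right in Hx by lra. unfold arcF. rewrite H by lra. reflexivity.
Qed.

Lemma polar_exists (a : C) : a <> 0%C -> exists th, a = (RtoC (Cmod a) * e th)%C.
Proof.
  intros Ha. assert (Hm : 0 < Cmod a) by (apply Cmod_gt_0; auto).
  destruct a as [x y].
  assert (Hm2 : Cmod (x, y) * Cmod (x, y) = x * x + y * y).
  { unfold Cmod; simpl. rewrite Rmult_1_r, Rmult_1_r. apply sqrt_sqrt. nra. }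
  set (m := Cmod (x, y)) in *.
  assert (Hx : -1 <= x / m <= 1).
  { split; [apply (Rmult_le_reg_r m) | apply (Rmult_le_reg_r m)]; auto; unfold Rdiv;
    rewrite Rmult_assoc, Rinv_l, Rmult_1_r by lra; nra. }
  assert (Hs : sqrt (1 - (x / m)²) = Rabs (y / m)).
  { rewrite <- sqrt_Rsqr_abs. f_equal. unfold Rsqr. field_simplify; try lra.
    replace (m ^ 2) with (x * x + y * y) by (rewrite <- Hm2; ring). field. nra. }
  destruct (Rle_dec 0 y) as [Hy|Hy].
  - exists (acos (x / m)). unfold e. rewrite cos_acos, sin_acos by auto. rewrite Hs.
    rewrite Rabs_right. 2: { apply Rle_ge, Rdiv_le_0_compat; lra. }
    apply injective_projections; simpl; field; lra.
  - exists (- acos (x / m)). unfold e. rewrite cos_neg, sin_neg, cos_acos, sin_acos by auto. rewrite Hs.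
    rewrite Rabs_left. 2: { unfold Rdiv. apply Rmult_neg_pos. lra. apply Rinv_0_lt_compat; lra. }
    apply injective_projections; simpl; field; lra.
Qed.

Lemma cos_eq_1_small (x : R) : -PI <= x <= PI -> cos x = 1 -> x = 0.
Proof.
  intros Hx Hc. destruct (Rle_dec 0 x).
  - rewrite <- (acos_cos x) by lra. rewrite Hc. apply acos_1.
  - assert (-x = 0). { rewrite <- (acos_cos (-x)) by lra. rewrite cos_neg, Hc. apply acos_1. } lra.
Qed.

Lemma polar_unique (r t m th : R) : 0 <= r -> 0 < m -> Rabs (t - th) <= PI ->
  (RtoC r * e t)%C = (RtoC m * e th)%C -> r = m /\ t = th.
Proof.
  intros Hr Hm Ht E.
  assert (Hrm : r = m). { apply (f_equal Cmod) in E. rewrite !Cmod_polar in E by lra. exact E. }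
  subst r. split; auto.
  unfold e in E. injection E. intros E2 E1.
  assert (Ec : cos t = cos th) by (apply (Rmult_eq_reg_l m); [nra | lra]).
  assert (Es : sin t = sin th) by (apply (Rmult_eq_reg_l m); [nra | lra]).
  assert (Hc : cos (t - th) = 1). { rewrite cos_minus, Ec, Es. rewrite <- (sin2_cos2 th). unfold Rsqr. ring. }
  apply Rabs_le_between in Ht.
  assert (t - th = 0) by (apply cos_eq_1_small; auto; lra). lra.
Qed.

Lemma cont_of_eps (K : C -> C) (z : C) :
  (forall eps, 0 < eps -> exists d, 0 < d /\ forall w, Cmod (w - z)%C < d -> Cmod (K w - K z)%C <= eps) ->
  continuous (T:=C_UniformSpace) (U:=C_UniformSpace) K z.
Proof.
  intros H P [eps HP].
  destruct (H (eps / 2)) as [d [Hd Hw]]. destruct eps; simpl; lra.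
  apply locC_abs_prod. exists (mkposreal d Hd). intros w Hwd. apply HP.
  specialize (Hw w Hwd). pose proof (Rmax_Cmod (K w - K z)%C) as Hm.
  pose proof (Rmax_l (Rabs (fst (K w - K z)%C)) (Rabs (snd (K w - K z)%C))).
  pose proof (Rmax_r (Rabs (fst (K w - K z)%C)) (Rabs (snd (K w - K z)%C))).
  assert (He : 0 < eps) by (destruct eps; simpl; lra).
  destruct (K w), (K z); simpl in *. unfold Rminus in *.
  split; [change (Rabs (r + - r1) < eps) | change (Rabs (r0 + - r2) < eps)]; lra.
Qed.

Lemma Cmod_sub_eq0 (w a : C) : Cmod (w - a)%C = 0 -> w = a.
Proof. intros H. apply Cmod_eq_0 in H. replace w with ((w - a) + a)%C by ring. rewrite H. ring. Qed.

Definition HolPD (F : C -> C) : Prop := forall z, 0 < Cmod z < 1 -> exdC F z.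
Definition BddNear0 (F : C -> C) : Prop := exists B d, 0 < d /\ forall z, 0 < Cmod z < d -> Cmod (F z) <= B.

Definition Kq (F : C -> C) (a L : C) (w : C) : C :=
  if Req_EM_T (Cmod (w - a)%C) 0 then L else ((F w - F a) / (w - a))%C.

Lemma Kq_a F a L : Kq F a L a = L.
Proof.
  unfold Kq. destruct (Req_EM_T _ _) as [_|E]; auto.
  exfalso. apply E. replace (a - a)%C with (RtoC 0) by ring. apply Cmod_0.
Qed.

Lemma Kq_ne F a L w : Cmod (w - a)%C <> 0 -> Kq F a L w = ((F w - F a) / (w - a))%C.
Proof. intros H. unfold Kq. destruct (Req_EM_T _ _) as [E|E]; auto. contradiction. Qed.

Lemma Kq_hol F a L z : HolPD F -> 0 < Cmod z < 1 -> z <> a -> exdC (Kq F a L) z.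
Proof.
  intros HF Hz Hza.
  assert (Hd : 0 < Cmod (z - a)%C) by (apply Cmod_gt_0; intro E; apply Hza; replace z with ((z - a) + a)%C by ring; rewrite E; ring).
  apply (exdC_ext_loc (fun w => (F w - F a) / (w - a))%C).
  - apply (locC_ball z (Cmod (z - a)%C)); auto. intros w Hw. unfold Kq.
    destruct (Req_EM_T _ _) as [E|E]; auto.
    exfalso. apply Cmod_sub_eq0 in E. subst w.
    replace (a - z)%C with (- (z - a))%C in Hw by ring. rewrite Cmod_opp in Hw. lra.
  - apply exdC_div. apply exdC_minus. apply HF; auto. apply exdC_const.
    apply exdC_minus. apply exdC_id. apply exdC_const.
    intro E. apply Hza. replace z with ((z - a) + a)%C by ring. rewrite E. ring.
Qed.

Lemma Kq_cont_a F a L : isdC F a L -> continuous (T:=C_UniformSpace) (U:=C_UniformSpace) (Kq F a L) a.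
Proof.
  intros [_ Hd]. apply cont_of_eps. intros eps Heps.
  assert (Hfl : is_filter_lim (locally (T:=AbsRing_UniformSpace C_AbsRing) a) a) by (intros P HP; exact HP).
  destruct (Hd a Hfl (mkposreal eps Heps)) as [d Hdd]. simpl in Hdd.
  exists d. split. apply cond_pos. intros w Hw.
  rewrite Kq_a. destruct (Req_EM_T (Cmod (w - a)%C) 0) as [E|E].
  - apply Cmod_sub_eq0 in E. subst w. rewrite Kq_a. replace (L - L)%C with (RtoC 0) by ring. rewrite Cmod_0. lra.
  - rewrite Kq_ne by auto. specialize (Hdd w Hw).
    change (Cmod (F w - F a - (w - a) * L)%C <= eps * Cmod (w - a)%C) in Hdd.
    assert (Hwa : (w - a)%C <> 0%C) by (intro E2; apply E; rewrite E2; apply Cmod_0).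
    replace ((F w - F a) / (w - a) - L)%C with ((F w - F a - (w - a) * L) / (w - a))%C by (field; auto).
    rewrite Cmod_div by auto.
    assert (0 < Cmod (w - a)%C) by (apply Cmod_gt_0; auto).
    apply (Rmult_le_reg_r (Cmod (w - a)%C)); auto.
    replace (Cmod (F w - F a - (w - a) * L)%C / Cmod (w - a)%C * Cmod (w - a)%C) with (Cmod (F w - F a - (w - a) * L)%C) by (field; lra).
    exact Hdd.
Qed.

Lemma Kq_ContR F a L r1 r2 c : HolPD F -> isdC F a L -> 0 < r1 -> r2 < 1 ->
  ContR (Kq F a L) r1 r2 c (c + 2 * PI).
Proof.
  intros HF HL Hr1 Hr2 r t Hr Ht.
  destruct (classic ((RtoC r * e t)%C = a)) as [E|E].
  - rewrite E. apply Kq_cont_a. exact HL.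
  - apply ex_derive_contC. apply Kq_hol; auto. rewrite Cmod_polar; lra.
Qed.

Lemma e_ne0 t : e t <> 0%C.
Proof. intro E. apply (f_equal Cmod) in E. rewrite Cmod_e, Cmod_0 in E. lra. Qed.

Lemma RtoC_ne0 r : r <> 0 -> RtoC r <> 0%C.
Proof. intros H E. apply RtoC_inj in E. lra. Qed.

Lemma contR_of_hol (K : C -> C) r1 r2 c1 c2 : (forall r t, r1 <= r <= r2 -> c1 <= t <= c2 -> exdC K (RtoC r * e t)%C) ->
  ContR K r1 r2 c1 c2.
Proof. intros H r t Hr Ht. apply ex_derive_contC. apply H; auto. Qed.

Lemma polar_ne0 r t : 0 < r -> (RtoC r * e t)%C <> 0%C.
Proof. intros Hr E. apply (f_equal Cmod) in E. rewrite Cmod_polar, Cmod_0 in E; lra. Qed.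

Lemma CI_inv_z rho c : 0 < rho -> CIc (fun z => / z)%C rho c = (RtoC (2 * PI) * Ci)%C.
Proof.
  intros Hr. unfold CIc, ArcI.
  rewrite (RInt_ext (V:=C_R_CompleteNormedModule) _ (fun _ => Ci)).
  - rewrite RInt_const. rewrite C_R_scal. replace (c + 2 * PI - c) with (2 * PI) by ring. reflexivity.
  - intros x _. unfold arcF. change (@eq C (/ (RtoC rho * e x) * (Ci * RtoC rho * e x))%C Ci). field. split. intro E. apply (f_equal Cmod) in E. rewrite Cmod_e, Cmod_0 in E. lra. intro E. apply RtoC_inj in E. lra.
Qed.

Lemma CI_inv_za a rho c : 0 < Cmod a < rho -> CIc (fun z => / (z - a))%C rho c = (RtoC (2 * PI) * Ci)%C.
Proof.
  intros Ha. pose proof PI_RGT_0 as HPI.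
  set (V := fun z => (/ (z - a) - / z)%C).
  assert (Hne : forall r t, Cmod a < r -> (RtoC r * e t - a)%C <> 0%C).
  { intros r t Hr E. pose proof (Cmod_ge_0 a). apply (f_equal Cmod) in E. rewrite Cmod_0 in E.
    apply Cmod_sub_eq0 in E. apply (f_equal Cmod) in E. rewrite Cmod_polar in E; lra. }
  assert (HolV : forall r t, Cmod a < r -> exdC V (RtoC r * e t)%C).
  { intros r t Hr. unfold V. apply exdC_minus.
    - apply exdC_inv. apply exdC_minus. apply exdC_id. apply exdC_const. apply Hne; auto.
    - apply exdC_inv. apply exdC_id. apply polar_ne0. lra. }
  assert (Hconst : forall r, rho <= r -> CIc V rho c = CIc V r c).
  { intros r Hr. apply CIc_annulus. lra. intros r' t Hr' Ht. apply HolV. lra. }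
  assert (HV0 : CIc V rho c = 0%C).
  { destruct (Req_dec (Cmod (CIc V rho c)) 0) as [E|E]. apply Cmod_eq_0; auto.
    exfalso. set (v := Cmod (CIc V rho c)) in *.
    assert (Hv : 0 < v) by (pose proof (Cmod_ge_0 (CIc V rho c)); unfold v in *; lra).
    set (r := rho + 4 * PI * Cmod a / v + 1).
    assert (Hr1 : rho <= r). { unfold r. assert (0 <= 4 * PI * Cmod a / v) by (apply Rdiv_le_0_compat; nra). lra. }
    assert (Hb : Cmod (CIc V r c) <= 2 * PI * r * (Cmod a / (r * (r - Cmod a)))).
    { apply CIc_bound. lra. apply contR_of_hol. intros r' t Hr' _. apply HolV. lra.
      intros t _. unfold V.
      replace (/ (RtoC r * e t - a) - / (RtoC r * e t))%C with (a / ((RtoC r * e t) * (RtoC r * e t - a)))%C.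
      2: { field. repeat split; try apply e_ne0; try (apply RtoC_ne0; lra); try (apply Hne; lra). }
      rewrite Cmod_div, Cmod_mult, Cmod_polar by (first [lra | apply Cmult_neq_0; [apply polar_ne0; lra | apply Hne; lra]]).
      assert (Hd : r - Cmod a <= Cmod (RtoC r * e t - a)%C).
      { assert (Cmod (RtoC r * e t)%C <= Cmod (RtoC r * e t - a)%C + Cmod a).
        { replace (RtoC r * e t)%C with ((RtoC r * e t - a) + a)%C at 1 by ring. apply Cmod_triangle. }
        rewrite Cmod_polar in H; lra. }
      unfold Rdiv. apply Rmult_le_compat_l. apply Cmod_ge_0.
      apply Rinv_le_contravar. nra. apply Rmult_le_compat_l; lra. }
    rewrite <- Hconst in Hb by lra. fold v in Hb.
    replace (2 * PI * r * (Cmod a / (r * (r - Cmod a)))) with (2 * PI * Cmod a / (r - Cmod a)) in Hb by (field; lra).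
    assert (2 * PI * Cmod a / (r - Cmod a) < v).
    { apply (Rmult_lt_reg_r (r - Cmod a)). lra.
      replace (2 * PI * Cmod a / (r - Cmod a) * (r - Cmod a)) with (2 * PI * Cmod a) by (field; lra).
      assert (v * (r - Cmod a) >= v * (4 * PI * Cmod a / v + 1)).
      { apply Rle_ge, Rmult_le_compat_l; unfold r; lra. }
      replace (v * (4 * PI * Cmod a / v + 1)) with (4 * PI * Cmod a + v) in H by (field; lra).
      assert (0 <= Cmod a) by apply Cmod_ge_0. nra. }
    lra. }
  assert (E : CIc (fun z => / (z - a))%C rho c = CIc (fun z => V z + / z)%C rho c).
  { apply CIc_ext. intros t _. unfold V. ring. }
  assert (C1 : ContR V rho rho c (c + 2 * PI)).
  { apply contR_of_hol. intros r' t Hr' _. apply HolV. lra. }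
  assert (C2 : ContR (fun z => / z)%C rho rho c (c + 2 * PI)).
  { apply contR_of_hol. intros r' t Hr' _. apply exdC_inv. apply exdC_id. apply polar_ne0; lra. }
  rewrite E, (CIc_plus V (fun z => / z)%C rho c C1 C2), HV0, CI_inv_z by lra.
  ring.
Qed.

Lemma cauchy F a rho : HolPD F -> BddNear0 F -> 0 < Cmod a -> Cmod a < rho -> rho < 1 ->
  exists c, CIc (fun z => F z / (z - a))%C rho c = (RtoC (2 * PI) * Ci * F a)%C.
Proof.
  intros HF [B [d [Hd HB]]] Ha Har Hr1.
  pose proof PI_RGT_0 as HPI.
  set (m := Cmod a) in *.
  assert (Ha0 : a <> 0%C) by (intro E; unfold m in Ha; rewrite E, Cmod_0 in Ha; lra).
  destruct (HF a ltac:(unfold m in *; lra)) as [L HL].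
  destruct (polar_exists a Ha0) as [th Hth]. fold m in Hth.
  set (c := th - PI). exists c.
  set (K := Kq F a L).
  assert (HKhol : forall z, 0 < Cmod z < 1 -> z <> a -> exdC K z) by (intros; apply Kq_hol; auto).
  set (Bk := (B + Cmod (F a)) / (m / 2)).
  assert (HKb : forall z, 0 < Cmod z -> Cmod z < Rmin d (m / 2) -> Cmod (K z) <= Bk).
  { intros z Hz1 Hz2. assert (Hz3 : Cmod z < d) by (eapply Rlt_le_trans; [exact Hz2 | apply Rmin_l]).
    assert (Hz4 : Cmod z < m / 2) by (eapply Rlt_le_trans; [exact Hz2 | apply Rmin_r]).
    assert (Hza : m / 2 <= Cmod (z - a)%C).
    { assert (m <= Cmod (z - a)%C + Cmod z).
      { unfold m. replace a with (- (z - a) + z)%C at 1 by ring. eapply Rle_trans. apply Cmod_triangle. rewrite Cmod_opp. lra. }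
      lra. }
    unfold K. rewrite Kq_ne by lra. rewrite Cmod_div. 2: { intro E. rewrite E, Cmod_0 in Hza. lra. }
    assert (Cmod (F z - F a)%C <= B + Cmod (F a)).
    { eapply Rle_trans. apply Cmod_triangle. rewrite Cmod_opp. specialize (HB z ltac:(lra)). lra. }
    unfold Bk. unfold Rdiv. apply Rmult_le_compat. apply Cmod_ge_0.
    apply Rlt_le, Rinv_0_lt_compat. lra. auto. apply Rinv_le_contravar; lra. }
  assert (StepA : forall r1, 0 < r1 < m -> CIc K r1 c = 0%C).
  { intros r1 Hr.
    assert (Hconst : forall r, 0 < r <= r1 -> CIc K r c = CIc K r1 c).
    { intros r Hr'. apply CIc_annulus. lra. intros r' t Hr'' Ht. apply HKhol.
      rewrite Cmod_polar by lra. lra.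
      intro E. apply (f_equal Cmod) in E. rewrite Cmod_polar in E by lra. fold m in E. lra. }
    destruct (Req_dec (Cmod (CIc K r1 c)) 0) as [E|E]. apply Cmod_eq_0; auto.
    exfalso. set (v := Cmod (CIc K r1 c)) in *.
    assert (Hv : 0 < v) by (pose proof (Cmod_ge_0 (CIc K r1 c)); unfold v in *; lra).
    assert (HBk : 0 <= Bk).
    { unfold Bk. apply Rdiv_le_0_compat. 2: lra. pose proof (Cmod_ge_0 (F a)).
      assert (Hzz : 0 < Cmod (RtoC (Rmin d (m / 2) / 2) * e 0)%C < d).
      { rewrite Cmod_polar. 2: { assert (0 < Rmin d (m / 2)) by (apply Rmin_pos; lra). lra. }
        assert (0 < Rmin d (m / 2)) by (apply Rmin_pos; lra). pose proof (Rmin_l d (m / 2)). lra. }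
      specialize (HB _ Hzz). pose proof (Cmod_ge_0 (F (RtoC (Rmin d (m / 2) / 2) * e 0)%C)). lra. }
    set (r := Rmin (Rmin r1 (Rmin d (m / 2) / 2)) (v / (4 * PI * (Bk + 1)))).
    assert (Hm0 : 0 < Rmin d (m / 2)) by (apply Rmin_pos; lra).
    assert (Hrpos : 0 < r).
    { unfold r. apply Rmin_pos. apply Rmin_pos; lra. apply Rdiv_lt_0_compat; nra. }
    assert (Hrr1 : r <= r1) by (unfold r; eapply Rle_trans; [apply Rmin_l | apply Rmin_l]).
    assert (Hrd : r < Rmin d (m / 2)) by (unfold r; eapply Rle_lt_trans; [apply Rmin_l | eapply Rle_lt_trans; [apply Rmin_r | lra]]).
    assert (Hrv : r <= v / (4 * PI * (Bk + 1))) by (unfold r; apply Rmin_r).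
    assert (Hbd : Cmod (CIc K r c) <= 2 * PI * r * Bk).
    { apply CIc_bound. lra.
      - apply contR_of_hol. intros r' t Hr' _. apply HKhol.
        rewrite Cmod_polar by lra. pose proof (Rmin_r d (m / 2)). lra.
        intro E2. apply (f_equal Cmod) in E2. rewrite Cmod_polar in E2 by lra. fold m in E2. pose proof (Rmin_r d (m / 2)). lra.
      - intros t _. apply HKb. rewrite Cmod_polar; lra. rewrite Cmod_polar; lra. }
    rewrite (Hconst r) in Hbd by lra. fold v in Hbd.
    assert (2 * PI * r * Bk <= v / 2).
    { apply (Rmult_le_compat_r (4 * PI * (Bk + 1))) in Hrv; [| nra].
      replace (v / (4 * PI * (Bk + 1)) * (4 * PI * (Bk + 1))) with v in Hrv by (field; nra). nra. }
    lra. }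
  assert (StepB : CIc K rho c = 0%C).
  { rewrite <- (StepA (m / 2)) by lra. symmetry.
    apply (CIc_annulus_pt K (m / 2) rho c m th); try lra.
    - unfold c. lra.
    - apply Kq_ContR; auto; lra.
    - intros r t Hr Ht Hne. apply HKhol. rewrite Cmod_polar by lra. lra.
      intro E. rewrite Hth in E. apply polar_unique in E; try lra.
      apply Rabs_le. unfold c in Ht. lra. }
  assert (Hne : forall t, (RtoC rho * e t - a)%C <> 0%C).
  { intros t E. apply (f_equal Cmod) in E. rewrite Cmod_0 in E. apply Cmod_sub_eq0 in E.
    apply (f_equal Cmod) in E. rewrite Cmod_polar in E by lra. fold m in E. lra. }
  assert (E : CIc (fun z => F z / (z - a))%C rho c = CIc (fun z => K z + F a * / (z - a))%C rho c).
  { apply CIc_ext. intros t _. unfold K. rewrite Kq_ne.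
    2: { intro E. apply Cmod_eq_0 in E. apply (Hne t). exact E. }
    field. apply Hne. }
  assert (C1 : ContR K rho rho c (c + 2 * PI)) by (apply Kq_ContR; auto; lra).
  assert (C3 : ContR (fun z => / (z - a))%C rho rho c (c + 2 * PI)).
  { apply contR_of_hol. intros r' t Hr' _. apply exdC_inv. apply exdC_minus. apply exdC_id. apply exdC_const.
    replace r' with rho by lra. apply Hne. }
  assert (C2 : ContR (fun z => F a * / (z - a))%C rho rho c (c + 2 * PI)).
  { intros r t Hr Ht. apply contC_mult. apply contC_const. apply C3; auto. }
  rewrite E, (CIc_plus K _ rho c C1 C2), (CIc_scal _ rho c (F a) C3), StepB, CI_inv_za by (unfold m in *; lra).
  ring.
Qed.

Lemma bernoulli (x : R) (n : nat) : 0 <= x -> 1 + INR n * x <= (1 + x) ^ n.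
Proof.
  intros Hx. induction n as [|n IH]. simpl. lra.
  rewrite S_INR. simpl. assert (0 <= INR n) by apply pos_INR. 
  assert (0 <= INR n * x * x) by (apply Rmult_le_pos; [apply Rmult_le_pos|]; lra). nra.
Qed.

Lemma pow_bound (x y K : R) : 0 <= x -> 0 <= y -> (forall n, x ^ n <= y ^ n * K) -> x <= y.
Proof.
  intros Hx Hy H. destruct (Rle_dec x y) as [|Hxy]; auto. exfalso.
  assert (Hxy' : y < x) by lra.
  destruct (Req_dec y 0) as [Ey|Ey].
  - specialize (H 1%nat). simpl in H. rewrite Ey in H. lra.
  - assert (Hy0 : 0 < y) by lra.
    set (u := x / y - 1).
    assert (Hu : 0 < u). { unfold u. apply Rlt_Rminus. apply (Rmult_lt_reg_r y); auto. unfold Rdiv. rewrite Rmult_assoc, Rinv_l, Rmult_1_r; lra. }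
    assert (HK : forall n, 1 + INR n * u <= K).
    { intros n. eapply Rle_trans. apply bernoulli. lra.
      replace (1 + u) with (x / y) by (unfold u; ring).
      assert (Hyn : 0 < y ^ n) by (apply pow_lt; auto).
      replace ((x / y) ^ n) with (x ^ n / y ^ n) by (unfold Rdiv; rewrite Rpow_mult_distr, pow_inv; reflexivity).
      apply (Rmult_le_reg_r (y ^ n)); auto.
      replace (x ^ n / y ^ n * y ^ n) with (x ^ n) by (field; lra).
      rewrite Rmult_comm. apply H. }
    destruct (archimed (K / u)) as [Ha _].
    assert (Hup : 0 <= IZR (up (K / u))) .
    { assert (0 <= K). { specialize (HK O). simpl in HK. lra. }
      assert (0 <= K / u) by (apply Rdiv_le_0_compat; lra). lra. }
    specialize (HK (Z.to_nat (up (K / u)))).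
    rewrite INR_IZR_INZ in HK. rewrite Z2Nat.id in HK. 2: { apply le_IZR. lra. }
    assert (K < IZR (up (K / u)) * u).
    { apply (Rmult_lt_reg_r (/ u)). apply Rinv_0_lt_compat; auto.
      rewrite Rmult_assoc, Rinv_r, Rmult_1_r by lra. exact Ha. }
    lra.
Qed.

Theorem schwarz (g : C -> C) (M : R) :
  (forall z, Cmod z < 1 -> exdC g z) -> g 0%C = 0%C ->
  (forall z, Cmod z < 1 -> Cmod (g z) <= M) ->
  forall a, Cmod a < 1 -> Cmod (g a) <= M * Cmod a.
Proof.
  intros Hg Hg0 HM a Ha.
  pose proof PI_RGT_0 as HPI.
  assert (HM0 : 0 <= M). { specialize (HM 0%C). rewrite Cmod_0, Hg0, Cmod_0 in HM. apply HM. lra. }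
  destruct (Req_dec (Cmod a) 0) as [E|E].
  { apply Cmod_eq_0 in E. subst a. rewrite Hg0, Cmod_0. lra. }
  assert (Ha0 : 0 < Cmod a) by (pose proof (Cmod_ge_0 a); lra).
  set (q := fun z => (g z / z)%C).
  assert (Hq : HolPD q).
  { intros z Hz. unfold q. apply exdC_div. apply Hg; lra. apply exdC_id.
    intro E2. rewrite E2, Cmod_0 in Hz. lra. }
  destruct (Hg 0%C ltac:(rewrite Cmod_0; lra)) as [L [_ HL]].
  assert (Hfl : is_filter_lim (locally (T:=AbsRing_UniformSpace C_AbsRing) (RtoC 0)) (RtoC 0)) by (intros P HP; exact HP).
  destruct (HL (RtoC 0) Hfl (mkposreal 1 Rlt_0_1)) as [d Hd]. simpl in Hd.
  assert (Hqb : forall z, 0 < Cmod z < d -> Cmod (q z) <= Cmod L + 1).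
  { intros z Hz. specialize (Hd z). 
    assert (Hz0 : z <> 0%C) by (intro E2; rewrite E2, Cmod_0 in Hz; lra).
    assert (Hzd : Cmod (z - 0)%C < d) by (replace (z - 0)%C with z by ring; lra).
    specialize (Hd Hzd). change (Cmod (g z - g 0 - (z - 0) * L)%C <= 1 * Cmod (z - 0)%C) in Hd.
    rewrite Hg0 in Hd. replace (g z - 0 - (z - 0) * L)%C with (g z - z * L)%C in Hd by ring.
    replace (z - 0)%C with z in Hd by ring.
    unfold q. rewrite Cmod_div by auto.
    assert (Cmod (g z) <= (Cmod L + 1) * Cmod z).
    { replace (g z) with ((g z - z * L) + z * L)%C by ring. eapply Rle_trans. apply Cmod_triangle.
      rewrite Cmod_mult. lra. }
    apply (Rmult_le_reg_r (Cmod z)). lra.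
    replace (Cmod (g z) / Cmod z * Cmod z) with (Cmod (g z)) by (field; lra). lra. }
  assert (Hqn : forall n, HolPD (fun z => (q z) ^ n)%C /\ BddNear0 (fun z => (q z) ^ n)%C).
  { intros n. split.
    - intros z Hz. apply exdC_pow. apply Hq; auto.
    - exists ((Cmod L + 1) ^ n), d. split. apply cond_pos. intros z Hz. rewrite Cmod_pow.
      apply pow_incr. split. apply Cmod_ge_0. apply Hqb; auto. }
  assert (Hrho : forall rho, Cmod a < rho < 1 -> Cmod (q a) <= M / rho).
  { intros rho Hr.
    apply (pow_bound (Cmod (q a)) (M / rho) (rho / (rho - Cmod a))).
    apply Cmod_ge_0. apply Rdiv_le_0_compat; lra.
    intros n. destruct (Hqn n) as [H1 H2].
    destruct (cauchy _ a rho H1 H2 Ha0 ltac:(lra) ltac:(lra)) as [c Hc].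
    assert (Hbd : Cmod (CIc (fun z => (q z) ^ n / (z - a))%C rho c) <= 2 * PI * rho * ((M / rho) ^ n / (rho - Cmod a))).
    { apply CIc_bound. lra.
      - apply contR_of_hol. intros r t Hr' _. apply exdC_div. apply exdC_pow. apply Hq. rewrite Cmod_polar; lra.
        apply exdC_minus. apply exdC_id. apply exdC_const.
        intro E2. apply (f_equal Cmod) in E2. rewrite Cmod_0 in E2. apply Cmod_sub_eq0 in E2. apply (f_equal Cmod) in E2.
        rewrite Cmod_polar in E2; lra.
      - intros t _. set (z := (RtoC rho * e t)%C).
        assert (Hz : Cmod z = rho) by (unfold z; apply Cmod_polar; lra).
        assert (Hza : rho - Cmod a <= Cmod (z - a)%C).
        { assert (Cmod z <= Cmod (z - a)%C + Cmod a).
          { replace z with ((z - a) + a)%C at 1 by ring. apply Cmod_triangle. } lra. }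
        assert (Hza0 : (z - a)%C <> 0%C) by (intro E2; rewrite E2, Cmod_0 in Hza; lra).
        rewrite Cmod_div, Cmod_pow by auto.
        assert (Hqz : Cmod (q z) <= M / rho).
        { unfold q. rewrite Cmod_div. 2: { intro E2. rewrite E2, Cmod_0 in Hz. lra. }
          rewrite Hz. unfold Rdiv. apply Rmult_le_compat_r. apply Rlt_le, Rinv_0_lt_compat; lra. apply HM; lra. }
        unfold Rdiv. apply Rmult_le_compat. apply pow_le, Cmod_ge_0. apply Rlt_le, Rinv_0_lt_compat; lra.
        apply pow_incr. split. apply Cmod_ge_0. exact Hqz. apply Rinv_le_contravar; lra. }
    rewrite Hc in Hbd. rewrite !Cmod_mult, Cmod_Ci, Cmod_R, Cmod_pow, Rabs_right in Hbd by lra.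
    apply (Rmult_le_reg_l (2 * PI)). lra.
    replace (2 * PI * ((M / rho) ^ n * (rho / (rho - Cmod a)))) with (2 * PI * rho * ((M / rho) ^ n / (rho - Cmod a))) by (field; lra).
    lra. }
  assert (Hqa : Cmod (q a) <= M).
  { destruct (Rle_dec (Cmod (q a)) M) as [|Hn]; auto. exfalso.
    set (rho := (Rmax (Cmod a) (M / Cmod (q a)) + 1) / 2).
    assert (Hqa0 : 0 < Cmod (q a)) by lra.
    assert (HMq : M / Cmod (q a) < 1).
    { apply (Rmult_lt_reg_r (Cmod (q a))); auto. replace (M / Cmod (q a) * Cmod (q a)) with M by (field; lra). lra. }
    assert (Hr1 : Cmod a < rho < 1).
    { unfold rho. pose proof (Rmax_l (Cmod a) (M / Cmod (q a))). pose proof (Rmax_r (Cmod a) (M / Cmod (q a))).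
      assert (Rmax (Cmod a) (M / Cmod (q a)) < 1) by (apply Rmax_lub_lt; lra). split; lra. }
    specialize (Hrho rho Hr1).
    assert (M / Cmod (q a) < rho).
    { unfold rho. pose proof (Rmax_r (Cmod a) (M / Cmod (q a))). lra. }
    assert (M < rho * Cmod (q a)).
    { apply (Rmult_lt_compat_r (Cmod (q a))) in H; auto. replace (M / Cmod (q a) * Cmod (q a)) with M in H by (field; lra). lra. }
    assert (Cmod (q a) * rho <= M).
    { apply (Rmult_le_compat_r rho) in Hrho; [| lra]. replace (M / rho * rho) with M in Hrho by (field; lra). lra. }
    lra. }
  unfold q in Hqa. rewrite Cmod_div in Hqa. 2: { intro E2. rewrite E2, Cmod_0 in Ha0. lra. }
  apply (Rmult_le_compat_r (Cmod a)) in Hqa. 2: lra.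
  replace (Cmod (g a) / Cmod a * Cmod a) with (Cmod (g a)) in Hqa by (field; lra). exact Hqa.
Qed.

Lemma Cmod_sq (z : C) : Cmod z ^ 2 = fst z * fst z + snd z * snd z.
Proof. rewrite Cmod2_alt. unfold Re, Im. ring. Qed.

Lemma Cmod_lt_sq (p q : C) : fst p * fst p + snd p * snd p < fst q * fst q + snd q * snd q -> Cmod p < Cmod q.
Proof.
  intros H. pose proof (Cmod_ge_0 p). pose proof (Cmod_ge_0 q).
  pose proof (Cmod_sq p). pose proof (Cmod_sq q). simpl in *. nra.
Qed.

Lemma mob_den_ne0 (w h : C) : Cmod w < 1 -> Cmod h < 1 -> (1 + Cconj w * h)%C <> 0%C.
Proof.
  intros Hw Hh E. apply (f_equal Cmod) in E. rewrite Cmod_0 in E.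
  assert (Cmod (Cconj w * h)%C < 1).
  { rewrite Cmod_mult, Cmod_conj. pose proof (Cmod_ge_0 w). pose proof (Cmod_ge_0 h). nra. }
  assert (1 <= Cmod (1 + Cconj w * h)%C + Cmod (Cconj w * h)%C).
  { assert (Cmod (RtoC 1) <= Cmod (1 + Cconj w * h)%C + Cmod (Cconj w * h)%C).
    { pose proof (Cmod_triangle (1 + Cconj w * h) (- (Cconj w * h)))%C as T.
      replace ((1 + Cconj w * h) + - (Cconj w * h))%C with (RtoC 1) in T by ring.
      rewrite Cmod_opp in T. exact T. }
    rewrite Cmod_1 in H0. exact H0. }
  lra.
Qed.

Lemma mob_lt1 (w h : C) : Cmod w < 1 -> Cmod h < 1 -> Cmod ((h + w) / (1 + Cconj w * h))%C < 1.
Proof.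
  intros Hw Hh. rewrite Cmod_div by (apply mob_den_ne0; auto).
  assert (Hd : 0 < Cmod (1 + Cconj w * h)%C) by (apply Cmod_gt_0, mob_den_ne0; auto).
  apply (Rmult_lt_reg_r (Cmod (1 + Cconj w * h)%C)); auto.
  replace (Cmod (h + w)%C / Cmod (1 + Cconj w * h)%C * Cmod (1 + Cconj w * h)%C) with (Cmod (h + w)%C) by (field; lra).
  rewrite Rmult_1_l. apply Cmod_lt_sq.
  pose proof (Cmod_sq w) as Sw. pose proof (Cmod_sq h) as Sh.
  assert (Hw2 : Cmod w ^ 2 < 1) by (pose proof (Cmod_ge_0 w); nra).
  assert (Hh2 : Cmod h ^ 2 < 1) by (pose proof (Cmod_ge_0 h); nra).
  destruct w as [w1 w2], h as [h1 h2]. simpl in *.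
  nra.
Qed.

Lemma mob_exd (w h : C) : Cmod w < 1 -> Cmod h < 1 -> exdC (fun x => (x + w) / (1 + Cconj w * x))%C h.
Proof.
  intros Hw Hh. apply exdC_div. apply exdC_plus. apply exdC_id. apply exdC_const.
  apply exdC_plus. apply exdC_const. apply exdC_mult. apply exdC_const. apply exdC_id.
  apply mob_den_ne0; auto.
Qed.

Lemma key_ident (z w : C) : Cmod (1 - Cconj w * z)%C ^ 2 = Cmod (z - w)%C ^ 2 + (1 - Cmod z ^ 2) * (1 - Cmod w ^ 2).
Proof. rewrite !Cmod_sq. destruct z, w; simpl; ring. Qed.

Lemma real_ident A B S : 0 < A -> 0 < S -> 0 < B -> S * S = A * A - B * B ->
  2 * (B / (A + S)) / (1 + (B / (A + S)) * (B / (A + S))) = B / A.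
Proof.
  intros HA HS HB HSS.
  assert (E : (A + S) * (A + S) + B * B = 2 * A * (A + S)) by nra.
  replace (1 + B / (A + S) * (B / (A + S))) with (((A + S) * (A + S) + B * B) / ((A + S) * (A + S))) by (field; lra).
  rewrite E. field. lra.
Qed.

Lemma Cconj_R (r : R) : Cconj (RtoC r) = RtoC r.
Proof. apply injective_projections; simpl; ring. Qed.

Lemma two_point (f : C -> C) (d : R) (z w : C) :
  (forall x, Cmod x < 1 -> exdC f x) ->
  (forall x y, Cmod x < 1 -> Cmod y < 1 -> Cmod (f x - f y)%C <= d) ->
  Cmod z < 1 -> Cmod w < 1 ->
  Cmod (f z - f w)%C <= d * (Cmod (z - w)%C / (Cmod (1 - Cconj w * z)%C + sqrt ((1 - Cmod z ^ 2) * (1 - Cmod w ^ 2)))).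
Proof.
  intros Hf Hd Hz Hw.
  set (A := Cmod (1 - Cconj w * z)%C). set (B := Cmod (z - w)%C).
  set (P := (1 - Cmod z ^ 2) * (1 - Cmod w ^ 2)). set (S := sqrt P).
  assert (Hz2 : Cmod z ^ 2 < 1) by (pose proof (Cmod_ge_0 z); nra).
  assert (Hw2 : Cmod w ^ 2 < 1) by (pose proof (Cmod_ge_0 w); nra).
  assert (HP : 0 < P) by (unfold P; nra).
  assert (HS : 0 < S) by (unfold S; apply sqrt_lt_R0; lra).
  assert (HSS : S * S = P) by (unfold S; apply sqrt_sqrt; lra).
  assert (HI : A ^ 2 = B ^ 2 + P) by (unfold A, B, P; apply key_ident).
  assert (HA0 : 0 <= A) by apply Cmod_ge_0. assert (HB0 : 0 <= B) by apply Cmod_ge_0.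
  assert (HA : 0 < A) by nra.
  assert (Hd0 : 0 <= d). { specialize (Hd z z Hz Hz). replace (f z - f z)%C with (RtoC 0) in Hd by ring. rewrite Cmod_0 in Hd. exact Hd. }
  destruct (Req_dec B 0) as [EB|EB].
  { assert (z = w) by (apply Cmod_sub_eq0; exact EB). subst w.
    replace (f z - f z)%C with (RtoC 0) by ring. rewrite Cmod_0. fold B. rewrite EB.
    unfold Rdiv. rewrite Rmult_0_l, Rmult_0_r. lra. }
  assert (HB : 0 < B) by lra.
  assert (HBA : B < A) by nra.
  set (r := B / (A + S)).
  assert (Hr0 : 0 < r) by (unfold r; apply Rdiv_lt_0_compat; lra).
  assert (Hr1 : r < 1). { unfold r. apply (Rmult_lt_reg_r (A + S)). lra. replace (B / (A + S) * (A + S)) with B by (field; lra). lra. }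
  set (rho := B / A).
  assert (Hrho : 2 * r / (1 + r * r) = rho) by (unfold r, rho; apply real_ident; nra).
  assert (Hrho0 : 0 < rho) by (unfold rho; apply Rdiv_lt_0_compat; lra).
  assert (Hden : (1 - Cconj w * z)%C <> 0%C) by (intro E; fold A in HA; unfold A in HA; rewrite E, Cmod_0 in HA; lra).
  set (c := ((z - w) / (1 - Cconj w * z))%C).
  assert (Hc : Cmod c = rho) by (unfold c, rho, A, B; rewrite Cmod_div; auto).
  set (u := (c / RtoC rho)%C).
  assert (Hrne : RtoC rho <> 0%C) by (apply RtoC_ne0; lra).
  assert (Hu : Cmod u = 1). { unfold u. rewrite Cmod_div, Hc, Cmod_R, Rabs_right by (auto; lra). field. lra. }
  set (Mr := fun x => ((x + RtoC r) / (1 + Cconj (RtoC r) * x))%C).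
  set (Mw := fun x => ((x + w) / (1 + Cconj w * x))%C).
  set (phi := fun x => Mw (u * Mr x)%C).
  assert (Hrc : Cmod (RtoC r) < 1) by (rewrite Cmod_R, Rabs_right; lra).
  assert (Hin : forall x, Cmod x < 1 -> Cmod (u * Mr x)%C < 1).
  { intros x Hx. rewrite Cmod_mult, Hu, Rmult_1_l. apply mob_lt1; auto. }
  assert (Hphi : forall x, Cmod x < 1 -> Cmod (phi x) < 1) by (intros x Hx; apply mob_lt1; auto).
  assert (Hphid : forall x, Cmod x < 1 -> exdC phi x).
  { intros x Hx. unfold phi. apply (exdC_comp Mw (fun y => u * Mr y)%C).
    apply exdC_mult. apply exdC_const. apply mob_exd; auto. apply mob_exd; auto. }
  set (g := fun x => (f (phi x) - f (phi (0 - x)))%C).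
  assert (Hneg : forall x, Cmod (0 - x)%C = Cmod x) by (intros x; replace (0 - x)%C with (- x)%C by ring; apply Cmod_opp).
  assert (Hg : forall x, Cmod x < 1 -> exdC g x).
  { intros x Hx. unfold g. apply exdC_minus.
    - apply (exdC_comp f phi). apply Hphid; auto. apply Hf. apply Hphi; auto.
    - apply (exdC_comp f (fun y => phi (0 - y))%C).
      + apply (exdC_comp phi (fun y => 0 - y)%C). apply exdC_minus. apply exdC_const. apply exdC_id.
        apply Hphid. rewrite Hneg. auto.
      + apply Hf. apply Hphi. rewrite Hneg; auto. }
  assert (Hg0 : g (RtoC 0) = RtoC 0). { unfold g. replace (RtoC 0 - RtoC 0)%C with (RtoC 0) by ring. ring. }
  assert (HgM : forall x, Cmod x < 1 -> Cmod (g x) <= d).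
  { intros x Hx. unfold g. apply Hd. apply Hphi; auto. apply Hphi. rewrite Hneg; auto. }
  assert (Hs := schwarz g d Hg Hg0 HgM (RtoC r) Hrc).
  assert (E1 : phi (RtoC r) = z).
  { unfold phi, Mw, Mr. rewrite Cconj_R.
    replace ((RtoC r + RtoC r) / (1 + RtoC r * RtoC r))%C with (RtoC rho).
    2: { rewrite <- Hrho. rewrite <- RtoC_plus, <- RtoC_mult, <- RtoC_plus, <- RtoC_div by nra. f_equal. field. nra. }
    replace (u * RtoC rho)%C with c by (unfold u; field; auto).
    assert (Hw1 : (1 - Cconj w * w)%C <> 0%C).
    { rewrite Cmult_comm, <- Cmod2_conj. intro E. 
      assert (E2 : RtoC (1 - Cmod w ^ 2) = 0%C) by (rewrite RtoC_minus; exact E). apply RtoC_inj in E2. lra. }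
    assert (Hcd : (1 + Cconj w * c)%C <> 0%C) by (apply mob_den_ne0; auto; rewrite Hc; unfold rho; apply (Rmult_lt_reg_r A); auto; unfold Rdiv; rewrite Rmult_assoc, Rinv_l, Rmult_1_r; lra).
    unfold c. field. cbv beta. split. exact Hden.
    replace (RtoC (IZR 1) - Cconj w * z + Cconj w * (z - w))%C with (1 - Cconj w * w)%C by ring. exact Hw1. }
  assert (E2 : phi (0 - RtoC r)%C = w).
  { unfold phi, Mw, Mr. replace (0 - RtoC r + RtoC r)%C with (RtoC 0) by ring.
    replace (RtoC 0 / (1 + Cconj (RtoC r) * (0 - RtoC r)))%C with (RtoC 0).
    2: { unfold Cdiv. ring. }
    replace (u * RtoC 0)%C with (RtoC 0) by ring. replace (1 + Cconj w * 0)%C with (RtoC 1) by ring.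
    field. }
  unfold g in Hs. rewrite E1, E2 in Hs. rewrite Cmod_R, Rabs_right in Hs by lra. exact Hs.
Qed.

Theorem mainTheorem10 (f : C -> C) :
  analytic_on_disk f ->
  Rbar_lt (Finite 0) (diam_image_disk f) ->
  Rbar_lt (diam_image_disk f) p_infty ->
  forall z w : C, unit_disk z -> unit_disk w ->
    Cmod (f z - f w)%C / real (diam_image_disk f)
    <= Cmod (z - w)%C /
       (Cmod (1 - Cconj w * z)%C
        + sqrt ((1 - (Cmod z) ^ 2) * (1 - (Cmod w) ^ 2))).
Proof.
  intros Hf Hpos Hfin z w Hz Hw.
  assert (Hub := proj1 (Lub_Rbar_correct (fun r : R => exists z w : C,
    unit_disk z /\ unit_disk w /\ r = Cmod (f z - f w)%C))).
  unfold diam_image_disk in *.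
  destruct (Lub_Rbar _) as [d| |]; simpl in Hpos, Hfin; try contradiction.
  simpl.
  assert (Hd : forall x y, Cmod x < 1 -> Cmod y < 1 -> Cmod (f x - f y)%C <= d).
  { intros x y Hx Hy. apply (Hub (Cmod (f x - f y)%C)). exists x, y. repeat split; auto. }
  assert (Hfd : forall x, Cmod x < 1 -> exdC f x) by (intros x Hx; apply Hf; exact Hx).
  assert (H := two_point f d z w Hfd Hd Hz Hw).
  apply (Rmult_le_reg_r d). exact Hpos.
  replace (Cmod (f z - f w)%C / d * d) with (Cmod (f z - f w)%C) by (field; lra).
  rewrite Rmult_comm. exact H.
Qed.
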